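(* $\mathrm{Inv}(\mathcal{D})\subseteq\mathrm{Aut}(\mathcal{C}^\infty(I^2,\mathbb{C}))$; that is, for every $\star$-invertible $d\in\mathcal{D}$, the map $\varphi\mapsto d\star\varphi$ is an automorphism of the additive group $(\mathcal{C}^\infty(I^2),+)$.
   Context: Let $I\subset\mathbb{R}$ be compact and $\mathcal{C}^\infty(I^2)=\mathcal{C}^\infty(I^2,\mathbb{C})$ the complex-valued functions smooth on an open neighbourhood of $I^2$. $\mathcal{D}$ is the set of objects $d(x,y)=\sum_{i=-1}^{\infty}\tilde d_i(x,y)\delta^{(i)}(x-y)$ with $\tilde d_i\in\mathcal{C}^\infty(I^2)$, where $\delta^{(i)}$ for $i\ge0$ is the $i$th derivative of the Dirac delta and $\delta^{(-1)}:=\Theta$ is the Heaviside function ($\Theta(0)=1$). The product is $(d\star e)(x,y)=\int_I d(x,\tau)e(\tau,y)\,d\tau$ (well defined via Mikusiński weak limits of smooth functions), with unit $\delta(x-y)$; $\mathrm{Inv}(\mathcal{D})$ is the set of $\star$-invertible elements of $\mathcal{D}$. *)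

(* Defs.v *)
From Stdlib Require Export Reals List.
From Coquelicot Require Export Coquelicot.

Open Scope R_scope.

Definition inI (a b x : R) : Prop := a <= x <= b.
Definition inI2 (a b x y : R) : Prop := inI a b x /\ inI a b y.

Fixpoint Ck (U : R * R -> Prop) (k : nat) (g : R -> R -> R) : Prop :=
  (forall p, U p -> continuous (fun q : R * R => g (fst q) (snd q)) p) /\
  match k with
  | O => True
  | S k' =>
      (forall p, U p -> ex_derive (fun t => g t (snd p)) (fst p)
                     /\ ex_derive (fun t => g (fst p) t) (snd p)) /\
      Ck U k' (fun x y => Derive (fun t => g t y) x) /\
      Ck U k' (fun x y => Derive (fun t => g x t) y)
  end.

Definition smooth_nbhd (a b : R) (f : R -> R -> C) : Prop :=
  exists U : R * R -> Prop, open U /\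
    (forall x y, inI2 a b x y -> U (x, y)) /\
    forall k, Ck U k (fun x y => Re (f x y)) /\ Ck U k (fun x y => Im (f x y)).

(** h (given pointwise) defines an element of C^infty(I^2): it agrees on I^2
    with a function smooth on a neighbourhood of I^2. *)
Definition inCinf (a b : R) (h : R -> R -> C) : Prop :=
  exists g, smooth_nbhd a b g /\ forall x y, inI2 a b x y -> g x y = h x y.

Definition cRInt (g : R -> C) (u v : R) : C :=
  (RInt (fun t => Re (g t)) u v, RInt (fun t => Im (g t)) u v).
Definition cDerive (g : R -> C) : R -> C :=
  fun t => (Derive (fun s => Re (g s)) t, Derive (fun s => Im (g s)) t).
Fixpoint cDerive_n (n : nat) (g : R -> C) : R -> C :=
  match n with O => g | S n' => cDerive (cDerive_n n' g) end.

(** An element d(x,y) = theta(x,y) Θ(x-y) + sum_{i} deltas_i(x,y) δ^(i)(x-y)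
    of D (finitely many delta terms; the i-th list entry is the coefficient of
    δ^(i), i >= 0). *)
Record Dker : Type := mkD { theta : R -> R -> C ; deltas : list (R -> R -> C) }.

Definition inD (a b : R) (d : Dker) : Prop :=
  smooth_nbhd a b (theta d) /\ List.Forall (smooth_nbhd a b) (deltas d).

(** sum_i  ∫ c_i(x,τ) δ^(i)(x-τ) ψ(τ) dτ  =  sum_i ∂_τ^i [c_i(x,τ) ψ(τ)] |_{τ=x} *)
Fixpoint act_deltas (l : list (R -> R -> C)) (i : nat) (psi : R -> C) (x : R)
  : C :=
  match l with
  | nil => RtoC 0
  | c :: l' => Cplus (cDerive_n i (fun t => Cmult (c x t) (psi t)) x)
                     (act_deltas l' (S i) psi x)
  end.

(** (d ⋆ ψ)(x) = ∫_I d(x,τ) ψ(τ) dτ, with Θ(x-τ) restricting to a <= τ <= x. *)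
Definition act (a : R) (d : Dker) (psi : R -> C) (x : R) : C :=
  Cplus (cRInt (fun t => Cmult (theta d x t) (psi t)) a x)
        (act_deltas (deltas d) 0 psi x).

Definition star_fun (a : R) (d : Dker) (phi : R -> R -> C) : R -> R -> C :=
  fun x y => act a d (fun t => phi t y) x.

(** d ⋆ e = δ(x-y) as distributions on I^2: for every smooth test function
    Φ on I^2,  ∫_I ∫_I ∫_I d(x,τ) e(τ,y) Φ(x,y) dy dτ dx = ∫_I Φ(x,x) dx. *)
Definition star_is_delta (a b : R) (d e : Dker) : Prop :=
  forall Phi : R -> R -> C, smooth_nbhd a b Phi ->
    cRInt (fun x => act a d (fun t => act a e (fun y => Phi x y) t) x) a b
    = cRInt (fun x => Phi x x) a b.

Definition starInv (a b : R) (d : Dker) : Prop :=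
  inD a b d /\
  exists e, inD a b e /\ star_is_delta a b d e /\ star_is_delta a b e d.

(** F is an automorphism of the additive group (C^infty(I^2), +), elements of
    C^infty(I^2) being represented by functions smooth on a neighbourhood of
    I^2 and identified when they agree on I^2. *)
Definition additive_aut_Cinf (a b : R) (F : (R -> R -> C) -> (R -> R -> C))
  : Prop :=
  (forall phi, smooth_nbhd a b phi -> inCinf a b (F phi)) /\
  (forall phi psi, smooth_nbhd a b phi -> smooth_nbhd a b psi ->
     (forall x y, inI2 a b x y -> phi x y = psi x y) ->
     forall x y, inI2 a b x y -> F phi x y = F psi x y) /\
  (forall phi psi, smooth_nbhd a b phi -> smooth_nbhd a b psi ->
     forall x y, inI2 a b x y ->
       F (fun u v => Cplus (phi u v) (psi u v)) x y
       = Cplus (F phi x y) (F psi x y)) /\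
  (forall phi psi, smooth_nbhd a b phi -> smooth_nbhd a b psi ->
     (forall x y, inI2 a b x y -> F phi x y = F psi x y) ->
     forall x y, inI2 a b x y -> phi x y = psi x y) /\
  (forall psi, smooth_nbhd a b psi ->
     exists phi, smooth_nbhd a b phi /\
       forall x y, inI2 a b x y -> F phi x y = psi x y).

(* Main.v *)
Require Import Defs.
From Stdlib Require Import Lra Lia FunctionalExtensionality ClassicalEpsilon Classical.


Definition Uopen (U : R * R -> Prop) := forall p, U p ->
  exists eps, 0 < eps /\ forall q, Rabs (fst q - fst p) < eps -> Rabs (snd q - snd p) < eps -> U q.

Lemma loc2 (U : R * R -> Prop) p : Uopen U -> U p -> locally p U.
Proof.
  intros HU Hp. destruct (HU p Hp) as [eps [He H]].
  exists (mkposreal eps He). intros q [H1 H2]. apply H; assumption.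
Qed.

Lemma locx (U : R * R -> Prop) p : Uopen U -> U p -> locally (fst p) (fun t => U (t, snd p)).
Proof.
  intros HU Hp. destruct (HU p Hp) as [eps [He H]].
  exists (mkposreal eps He). intros t Ht. apply H; simpl. exact Ht.
  rewrite Rminus_eq_0, Rabs_R0; exact He.
Qed.

Lemma locy (U : R * R -> Prop) p : Uopen U -> U p -> locally (snd p) (fun t => U (fst p, t)).
Proof.
  intros HU Hp. destruct (HU p Hp) as [eps [He H]].
  exists (mkposreal eps He). intros t Ht. apply H; simpl.
  rewrite Rminus_eq_0, Rabs_R0; exact He. exact Ht.
Qed.

Lemma Ck_mono U k f : Ck U (S k) f -> Ck U k f.
Proof.
  revert f. induction k as [|k IH]; intros f H.
  - destruct H as [H _]. split; auto.
  - destruct H as [Hc [Hd [H1 H2]]]. split; [exact Hc|]. split; [exact Hd|].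
    split; apply IH; assumption.
Qed.

Lemma Ck_restr U V k f : (forall p, V p -> U p) -> Ck U k f -> Ck V k f.
Proof.
  intros HVU. revert f. induction k as [|k IH]; intros f H.
  - destruct H as [H _]. split; auto.
  - destruct H as [Hc [Hd [H1 H2]]]. split; [auto|]. split; [auto|].
    split; apply IH; assumption.
Qed.

Lemma Ck_ext U k f g : Uopen U ->
  (forall p, U p -> f (fst p) (snd p) = g (fst p) (snd p)) -> Ck U k f -> Ck U k g.
Proof.
  intros HU. revert f g. induction k as [|k IH]; intros f g Heq H.
  - destruct H as [H _]. split; auto. intros p Hp.
    apply (continuous_ext_loc _ (fun q : R * R => f (fst q) (snd q))).
    + generalize (loc2 U p HU Hp). apply filter_imp. intros q Hq. apply Heq; auto.
    + auto.
  - destruct H as [Hc [Hd [H1 H2]]]. split; [|split; [|split]].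
    + intros p Hp. apply (continuous_ext_loc _ (fun q : R * R => f (fst q) (snd q))).
      * generalize (loc2 U p HU Hp). apply filter_imp. intros q Hq. apply Heq; auto.
      * auto.
    + intros p Hp. destruct (Hd p Hp) as [Hd1 Hd2]. split.
      * apply (ex_derive_ext_loc (fun t => f t (snd p))); [|auto].
        generalize (locx U p HU Hp). apply filter_imp. intros t Ht.
        apply (Heq (t, snd p)); auto.
      * apply (ex_derive_ext_loc (fun t => f (fst p) t)); [|auto].
        generalize (locy U p HU Hp). apply filter_imp. intros t Ht.
        apply (Heq (fst p, t)); auto.
    + apply (IH _ _ ) with (2 := H1). intros p Hp. apply Derive_ext_loc.
      generalize (locx U p HU Hp). apply filter_imp. intros t Ht.
      apply (Heq (t, snd p)); auto.
    + apply (IH _ _ ) with (2 := H2). intros p Hp. apply Derive_ext_loc.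
      generalize (locy U p HU Hp). apply filter_imp. intros t Ht.
      apply (Heq (fst p, t)); auto.
Qed.


Lemma Ck_const U k c : Ck U k (fun _ _ => c).
Proof.
  revert c. induction k as [|k IH]; intros c.
  - split; auto. intros p _. apply continuous_const.
  - split; [intros p _; apply continuous_const|]. split.
    + intros p _. split; apply ex_derive_const.
    + assert (E : (fun x y : R => Derive (fun _ : R => c) x) = (fun _ _ => 0)).
      { apply functional_extensionality; intro x; apply functional_extensionality; intro y.
        apply Derive_const. }
      assert (E2 : (fun x y : R => Derive (fun _ : R => c) y) = (fun _ _ => 0)).
      { apply functional_extensionality; intro x; apply functional_extensionality; intro y.
        apply Derive_const. }
      split; [rewrite E|rewrite E2]; apply IH.
Qed.

Lemma Ck_cont U k f p : Ck U k f -> U p -> continuous (fun q : R * R => f (fst q) (snd q)) p.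
Proof. destruct k; intros [H _]; auto. Qed.

Lemma Ck_plus U k f g : Uopen U -> Ck U k f -> Ck U k g -> Ck U k (fun x y => f x y + g x y).
Proof.
  intros HU. revert f g. induction k as [|k IH]; intros f g Hf Hg.
  - split; auto. intros p Hp.
    apply (continuous_plus (fun q : R * R => f (fst q) (snd q)) (fun q : R * R => g (fst q) (snd q)));
      eapply Ck_cont; eauto.
  - pose proof Hf as [Hfc [Hfd [Hf1 Hf2]]]. pose proof Hg as [Hgc [Hgd [Hg1 Hg2]]].
    split; [|split; [|split]].
    + intros p Hp.
      apply (continuous_plus (fun q : R * R => f (fst q) (snd q)) (fun q : R * R => g (fst q) (snd q)));
        eapply Ck_cont; eauto.
    + intros p Hp. destruct (Hfd p Hp), (Hgd p Hp). split; [apply (ex_derive_plus (fun t => f t (snd p)) (fun t => g t (snd p)))|apply (ex_derive_plus (fun t => f (fst p) t) (fun t => g (fst p) t))]; auto.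
    + eapply Ck_ext; [exact HU| |apply (IH _ _ Hf1 Hg1)].
      intros p Hp. simpl. destruct (Hfd p Hp), (Hgd p Hp).
      symmetry. apply Derive_plus; auto.
    + eapply Ck_ext; [exact HU| |apply (IH _ _ Hf2 Hg2)].
      intros p Hp. simpl. destruct (Hfd p Hp), (Hgd p Hp).
      symmetry. apply Derive_plus; auto.
Qed.

Lemma Ck_mult U k f g : Uopen U -> Ck U k f -> Ck U k g -> Ck U k (fun x y => f x y * g x y).
Proof.
  intros HU. revert f g. induction k as [|k IH]; intros f g Hf Hg.
  - split; auto. intros p Hp.
    apply (continuous_mult (fun q : R * R => f (fst q) (snd q)) (fun q : R * R => g (fst q) (snd q)));
      eapply Ck_cont; eauto.
  - pose proof Hf as [Hfc [Hfd [Hf1 Hf2]]]. pose proof Hg as [Hgc [Hgd [Hg1 Hg2]]].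
    pose proof (Ck_mono _ _ _ Hf) as Hf'. pose proof (Ck_mono _ _ _ Hg) as Hg'.
    split; [|split; [|split]].
    + intros p Hp.
      apply (continuous_mult (fun q : R * R => f (fst q) (snd q)) (fun q : R * R => g (fst q) (snd q)));
        eapply Ck_cont; eauto.
    + intros p Hp. destruct (Hfd p Hp), (Hgd p Hp). split; [apply (ex_derive_mult (fun t => f t (snd p)) (fun t => g t (snd p)))|apply (ex_derive_mult (fun t => f (fst p) t) (fun t => g (fst p) t))]; auto.
    + eapply Ck_ext; [exact HU| |apply (Ck_plus _ _ _ _ HU (IH _ _ Hf1 Hg') (IH _ _ Hf' Hg1))].
      intros p Hp. simpl. destruct (Hfd p Hp), (Hgd p Hp).
      symmetry. apply (Derive_mult (fun t => f t (snd p)) (fun t => g t (snd p))); auto.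
    + eapply Ck_ext; [exact HU| |apply (Ck_plus _ _ _ _ HU (IH _ _ Hf2 Hg') (IH _ _ Hf' Hg2))].
      intros p Hp. simpl. destruct (Hfd p Hp), (Hgd p Hp).
      symmetry. apply (Derive_mult (fun t => f (fst p) t) (fun t => g (fst p) t)); auto.
Qed.

Lemma Ck_scal U k c f : Uopen U -> Ck U k f -> Ck U k (fun x y => c * f x y).
Proof. intros HU Hf. apply (Ck_mult U k (fun _ _ => c) f HU (Ck_const _ _ _) Hf). Qed.

Lemma Ck_minus U k f g : Uopen U -> Ck U k f -> Ck U k g -> Ck U k (fun x y => f x y - g x y).
Proof.
  intros HU Hf Hg. eapply Ck_ext; [exact HU| |apply (Ck_plus U k f (fun x y => -1 * g x y) HU Hf (Ck_scal _ _ _ _ HU Hg))].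
  intros p _. simpl. ring.
Qed.


Definition J (a b e x : R) := a - e < x < b + e.
Definition Bx (a b e : R) (p : R * R) := J a b e (fst p) /\ J a b e (snd p).

Lemma Bx_open a b e : Uopen (Bx a b e).
Proof.
  intros [x y] [[H1 H2] [H3 H4]]; simpl in *.
  exists (Rmin (Rmin (x - (a - e)) (b + e - x)) (Rmin (y - (a - e)) (b + e - y))).
  split.
  - repeat apply Rmin_pos; lra.
  - intros [x' y'] Hx Hy; simpl in *.
    pose proof (Rmin_l (Rmin (x - (a - e)) (b + e - x)) (Rmin (y - (a - e)) (b + e - y))).
    pose proof (Rmin_r (Rmin (x - (a - e)) (b + e - x)) (Rmin (y - (a - e)) (b + e - y))).
    pose proof (Rmin_l (x - (a - e)) (b + e - x)). pose proof (Rmin_r (x - (a - e)) (b + e - x)).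
    pose proof (Rmin_l (y - (a - e)) (b + e - y)). pose proof (Rmin_r (y - (a - e)) (b + e - y)).
    apply Rabs_def2 in Hx. apply Rabs_def2 in Hy.
    unfold Bx, J; simpl; lra.
Qed.

Lemma cont_slice1 (F : R -> R -> R) x y :
  continuous (fun q : R * R => F (fst q) (snd q)) (x, y) -> continuous (fun t => F t y) x.
Proof.
  intros H. apply (continuous_comp_2 (fun t : R => t) (fun _ : R => y) F).
  apply continuous_id. apply continuous_const. exact H.
Qed.

Lemma cont_slice2 (F : R -> R -> R) x y :
  continuous (fun q : R * R => F (fst q) (snd q)) (x, y) -> continuous (fun t => F x t) y.
Proof.
  intros H. apply (continuous_comp_2 (fun _ : R => x) (fun t : R => t) F).
  apply continuous_const. apply continuous_id. exact H.
Qed.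

Lemma Ck_sel1 a b e k f c : J a b e c -> Ck (Bx a b e) k f -> Ck (Bx a b e) k (fun x _ => f x c).
Proof.
  intros Hc. revert f. induction k as [|k IH]; intros f Hf.
  - split; auto. intros [x y] [Hx Hy].
    apply (continuous_comp_2 (fun q : R * R => fst q) (fun _ => c) f).
    apply continuous_fst. apply continuous_const.
    apply (Ck_cont _ _ _ (x, c) Hf). split; auto.
  - destruct Hf as [Hfc [Hfd [Hf1 Hf2]]]. split; [|split; [|split]].
    + intros [x y] [Hx Hy].
      apply (continuous_comp_2 (fun q : R * R => fst q) (fun _ => c) f).
      apply continuous_fst. apply continuous_const.
      apply (Hfc (x, c)). split; auto.
    + intros [x y] [Hx Hy]. split.
      * apply (Hfd (x, c)). split; auto.
      * apply ex_derive_const.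
    + apply (IH _ Hf1).
    + assert (E : (fun x y : R => Derive (fun _ : R => f x c) y) = (fun _ _ => 0)).
      { apply functional_extensionality; intro x; apply functional_extensionality; intro y.
        apply Derive_const. }
      rewrite E. apply Ck_const.
Qed.

Lemma Ck_sel2 a b e k f c : J a b e c -> Ck (Bx a b e) k f -> Ck (Bx a b e) k (fun _ y => f y c).
Proof.
  intros Hc. revert f. induction k as [|k IH]; intros f Hf.
  - split; auto. intros [x y] [Hx Hy].
    apply (continuous_comp_2 (fun q : R * R => snd q) (fun _ => c) f).
    apply continuous_snd. apply continuous_const.
    apply (Ck_cont _ _ _ (y, c) Hf). split; auto.
  - destruct Hf as [Hfc [Hfd [Hf1 Hf2]]]. split; [|split; [|split]].
    + intros [x y] [Hx Hy].
      apply (continuous_comp_2 (fun q : R * R => snd q) (fun _ => c) f).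
      apply continuous_snd. apply continuous_const.
      apply (Hfc (y, c)). split; auto.
    + intros [x y] [Hx Hy]. split.
      * apply ex_derive_const.
      * apply (Hfd (y, c)). split; auto.
    + assert (E : (fun x y : R => Derive (fun _ : R => f y c) x) = (fun _ _ => 0)).
      { apply functional_extensionality; intro x; apply functional_extensionality; intro y.
        apply Derive_const. }
      rewrite E. apply Ck_const.
    + apply (IH _ Hf1).
Qed.

Lemma Ck_sel3 a b e k f c : J a b e c -> Ck (Bx a b e) k f -> Ck (Bx a b e) k (fun x _ => f c x).
Proof.
  intros Hc. revert f. induction k as [|k IH]; intros f Hf.
  - split; auto. intros [x y] [Hx Hy].
    apply (continuous_comp_2 (fun _ => c) (fun q : R * R => fst q) f).
    apply continuous_const. apply continuous_fst.
    apply (Ck_cont _ _ _ (c, x) Hf). split; auto.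
  - destruct Hf as [Hfc [Hfd [Hf1 Hf2]]]. split; [|split; [|split]].
    + intros [x y] [Hx Hy].
      apply (continuous_comp_2 (fun _ => c) (fun q : R * R => fst q) f).
      apply continuous_const. apply continuous_fst.
      apply (Hfc (c, x)). split; auto.
    + intros [x y] [Hx Hy]. split.
      * apply (Hfd (c, x)). split; auto.
      * apply ex_derive_const.
    + apply (IH _ Hf2).
    + assert (E : (fun x y : R => Derive (fun _ : R => f c x) y) = (fun _ _ => 0)).
      { apply functional_extensionality; intro x; apply functional_extensionality; intro y.
        apply Derive_const. }
      rewrite E. apply Ck_const.
Qed.


Lemma ballR (x eps y : R) : ball x eps y <-> Rabs (y - x) < eps.
Proof. reflexivity. Qed.

Lemma cont2_eps (u : R -> R -> R) x0 t0 :
  continuous (fun q : R * R => u (fst q) (snd q)) (x0, t0) ->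
  forall eps, 0 < eps -> exists d, 0 < d /\ forall x t, Rabs (x - x0) < d -> Rabs (t - t0) < d ->
    Rabs (u x t - u x0 t0) < eps.
Proof.
  intros H eps He. apply filterlim_locally with (eps := mkposreal eps He) in H.
  destruct H as [d Hd]. exists d. split. apply cond_pos.
  intros x t H1 H2. apply (Hd (x, t)). split; simpl; apply ballR; assumption.
Qed.

Lemma cont2_of_eps (F : R -> R -> R) x0 y0 :
  (forall eps, 0 < eps -> exists d, 0 < d /\ forall x y, Rabs (x - x0) < d -> Rabs (y - y0) < d ->
    Rabs (F x y - F x0 y0) < eps) ->
  continuous (fun q : R * R => F (fst q) (snd q)) (x0, y0).
Proof.
  intros H. apply filterlim_locally. intros eps.
  destruct (H eps (cond_pos eps)) as [d [Hd H']].
  exists (mkposreal d Hd). intros [x y] [H1 H2]. apply ballR. simpl in *.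
  apply H'; assumption.
Qed.

Lemma cont1_eps (f : R -> R) x0 : continuous f x0 ->
  forall eps, 0 < eps -> exists d, 0 < d /\ forall x, Rabs (x - x0) < d -> Rabs (f x - f x0) < eps.
Proof.
  intros H eps He. apply filterlim_locally with (eps := mkposreal eps He) in H.
  destruct H as [d Hd]. exists d. split. apply cond_pos.
  intros x H1. apply (Hd x). apply ballR; assumption.
Qed.

Lemma J_between a b e p q t : J a b e p -> J a b e q -> Rmin p q <= t <= Rmax p q -> J a b e t.
Proof.
  unfold J. intros H1 H2 H3. destruct (Rle_dec p q).
  - rewrite Rmin_left, Rmax_right in H3 by lra. lra.
  - rewrite Rmin_right, Rmax_left in H3 by lra. lra.
Qed.

Lemma ex_RInt_J a b e (f : R -> R) p q : (forall t, J a b e t -> continuous f t) ->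
  J a b e p -> J a b e q -> ex_RInt f p q.
Proof.
  intros Hf Hp Hq. apply (ex_RInt_continuous (V := R_CompleteNormedModule)). intros z Hz. apply Hf.
  exact (J_between a b e p q z Hp Hq Hz).
Qed.

Lemma RInt_bound (f : R -> R) p q M : ex_RInt f p q ->
  (forall t, Rmin p q <= t <= Rmax p q -> Rabs (f t) <= M) ->
  Rabs (RInt f p q) <= Rabs (q - p) * M.
Proof.
  intros Hi Hb. destruct (Rle_dec p q).
  - rewrite (Rabs_right (q - p)) by lra. apply abs_RInt_le_const; auto.
    intros t Ht. apply Hb. rewrite Rmin_left, Rmax_right by lra. lra.
  - rewrite <- (opp_RInt_swap f q p) by (apply ex_RInt_swap; auto).
    change (Rabs (- RInt f q p) <= Rabs (q - p) * M).
    rewrite Rabs_Ropp. rewrite (Rabs_left (q - p)) by lra.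
    replace (- (q - p)) with (p - q) by ring.
    apply abs_RInt_le_const; auto. lra. apply ex_RInt_swap; auto.
    intros t Ht. apply Hb. rewrite Rmin_right, Rmax_left by lra. lra.
Qed.

Definition cont2 (u : R -> R -> R) p := continuous (fun q : R * R => u (fst q) (snd q)) p.

Lemma cont_prod_slice a b e (u v : R -> R -> R) x y t :
  (forall p, Bx a b e p -> cont2 u p) -> (forall p, Bx a b e p -> cont2 v p) ->
  J a b e x -> J a b e y -> J a b e t -> continuous (fun t => u x t * v t y) t.
Proof.
  intros Hu Hv Hx Hy Ht.
  apply (continuous_mult (fun t => u x t) (fun t => v t y)).
  - apply cont_slice2. apply (Hu (x, t)). split; auto.
  - apply cont_slice1. apply (Hv (t, y)). split; auto.
Qed.

Definition Q (c : R) (u v : R -> R -> R) : R -> R -> R :=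
  fun x y => RInt (fun t => u x t * v t y) c x.

Lemma bound1 a b e (g : R -> R) lo hi : lo <= hi -> (forall t, J a b e t -> continuous g t) ->
  J a b e lo -> J a b e hi -> exists M, 0 <= M /\ forall t, lo <= t <= hi -> Rabs (g t) <= M.
Proof.
  intros Hle Hg Hlo Hhi.
  destruct (continuity_ab_maj (fun t => Rabs (g t)) lo hi Hle) as [m [Hm _]].
  - intros c Hc. apply continuity_pt_filterlim.
    apply (continuous_comp g Rabs). apply Hg. unfold J in *; lra.
    apply continuity_pt_filterlim. apply Rcontinuity_abs.
  - exists (Rabs (g m)). split. apply Rabs_pos. exact Hm.
Qed.

Lemma J_min a b e p q : J a b e p -> J a b e q -> J a b e (Rmin p q).
Proof. unfold J, Rmin; intros; destruct Rle_dec; lra. Qed.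
Lemma J_max a b e p q : J a b e p -> J a b e q -> J a b e (Rmax p q).
Proof. unfold J, Rmax; intros; destruct Rle_dec; lra. Qed.

Lemma small_mul A eta eps : 0 <= A -> 0 < eps -> 0 < eta -> eta <= eps / (2 * (A + 1)) -> A * eta < eps / 2.
Proof.
  intros HA He Hh Hle. set (w := eps / (2 * (A + 1))) in *.
  assert (Hw : w * (2 * (A + 1)) = eps) by (unfold w; field; lra).
  nra.
Qed.

Lemma lt_min z p q : z < Rmin p q -> z < p /\ z < q.
Proof. intros H. split; eapply Rlt_le_trans; [exact H|apply Rmin_l|exact H|apply Rmin_r]. Qed.

Lemma between_abs p q t : Rmin p q <= t <= Rmax p q -> Rabs (t - p) <= Rabs (q - p).
Proof. unfold Rmin, Rmax; destruct Rle_dec; intros; unfold Rabs; repeat destruct Rcase_abs; lra. Qed.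

Lemma Qcont a b e c u v x0 y0 :
  (forall p, Bx a b e p -> cont2 u p) -> (forall p, Bx a b e p -> cont2 v p) ->
  J a b e c -> J a b e x0 -> J a b e y0 -> cont2 (Q c u v) (x0, y0).
Proof.
  intros Hu Hv Hc Hx0 Hy0. unfold cont2 in *. apply cont2_of_eps. intros eps He.
  assert (Hlo : J a b e (Rmin c x0)) by (apply J_min; auto).
  assert (Hhi : J a b e (Rmax c x0)) by (apply J_max; auto).
  assert (Hlh : Rmin c x0 <= Rmax c x0) by (apply Rle_trans with c; [apply Rmin_l|apply Rmax_l]).
  assert (Hseg : forall t, Rmin c x0 <= t <= Rmax c x0 -> J a b e t).
  { intros t Ht. apply (J_between a b e c x0 t Hc Hx0 Ht). }
  destruct (bound1 a b e (fun t => v t y0) _ _ Hlh) as [Mv [HMv0 HMv]]; auto.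
  { intros t Ht. apply cont_slice1. apply (Hv (t, y0)). split; auto. }
  destruct (bound1 a b e (fun t => u x0 t) _ _ Hlh) as [Mu [HMu0 HMu]]; auto.
  { intros t Ht. apply cont_slice2. apply (Hu (x0, t)). split; auto. }
  set (K := Rabs (x0 - c)).
  set (A := K * (Mv + 1 + Mu)).
  assert (HA : 0 <= A) by (unfold A, K; apply Rmult_le_pos; [apply Rabs_pos|lra]).
  set (eta := Rmin 1 (eps / (2 * (A + 1)))).
  assert (Heta : 0 < eta) by (unfold eta; apply Rmin_pos; [lra|apply Rdiv_lt_0_compat; lra]).
  assert (Heta1 : eta <= 1) by apply Rmin_l.
  assert (Heta2 : eta <= eps / (2 * (A + 1))) by apply Rmin_r.
  destruct (uniform_continuity_2d_1d v (Rmin c x0) (Rmax c x0) y0) with (eps := mkposreal eta Heta)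
    as [d3 Hd3].
  { intros t Ht. apply continuity_2d_pt_filterlim. apply (Hv (t, y0)). split; auto. }
  destruct (uniform_continuity_2d_1d' u (Rmin c x0) (Rmax c x0) x0) with (eps := mkposreal eta Heta)
    as [d4 Hd4].
  { intros t Ht. apply continuity_2d_pt_filterlim. apply (Hu (x0, t)). split; auto. }
  destruct (cont2_eps u x0 x0 (Hu (x0, x0) (conj Hx0 Hx0)) 1 Rlt_0_1) as [d1 [Hd1 Hd1']].
  destruct (cont2_eps v x0 y0 (Hv (x0, y0) (conj Hx0 Hy0)) 1 Rlt_0_1) as [d2 [Hd2 Hd2']].
  set (M1 := (Rabs (u x0 x0) + 1) * (Rabs (v x0 y0) + 1)).
  assert (HM1 : 0 <= M1) by (unfold M1; apply Rmult_le_pos; pose proof (Rabs_pos (u x0 x0)); pose proof (Rabs_pos (v x0 y0)); lra).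
  set (d5 := Rmin (x0 - (a - e)) (b + e - x0)).
  set (d7 := Rmin (y0 - (a - e)) (b + e - y0)).
  set (d6 := eps / (2 * (M1 + 1))).
  assert (Hd5 : 0 < d5) by (unfold d5, J in *; apply Rmin_pos; lra).
  assert (Hd7 : 0 < d7) by (unfold d7, J in *; apply Rmin_pos; lra).
  assert (Hd6 : 0 < d6) by (unfold d6; apply Rdiv_lt_0_compat; lra).
  exists (Rmin (Rmin (Rmin d1 d2) (Rmin d3 d4)) (Rmin (Rmin d5 d6) d7)).
  split.
  { clearbody d5 d6 d7. repeat apply Rmin_pos; try lra; apply cond_pos. }
  intros x y Hx Hy.
  apply lt_min in Hx. destruct Hx as [Hx Hx']. apply lt_min in Hx. destruct Hx as [Hx Hx''].
  apply lt_min in Hx. destruct Hx as [Hxd1 Hxd2]. apply lt_min in Hx''. destruct Hx'' as [Hxd3 Hxd4].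
  apply lt_min in Hx'. destruct Hx' as [Hx' Hxd7]. apply lt_min in Hx'. destruct Hx' as [Hxd5 Hxd6].
  apply lt_min in Hy. destruct Hy as [Hy Hy']. apply lt_min in Hy. destruct Hy as [Hy Hy''].
  apply lt_min in Hy. destruct Hy as [Hyd1 Hyd2]. apply lt_min in Hy''. destruct Hy'' as [Hyd3 Hyd4].
  apply lt_min in Hy'. destruct Hy' as [Hy' Hyd7]. apply lt_min in Hy'. destruct Hy' as [Hyd5 Hyd6].
  assert (Jx : J a b e x).
  { unfold d5, J in *. apply Rabs_def2 in Hxd5. pose proof (Rmin_l (x0 - (a - e)) (b + e - x0)).
    pose proof (Rmin_r (x0 - (a - e)) (b + e - x0)). lra. }
  assert (Jy : J a b e y).
  { unfold d7, J in *. apply Rabs_def2 in Hyd7. pose proof (Rmin_l (y0 - (a - e)) (b + e - y0)).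
    pose proof (Rmin_r (y0 - (a - e)) (b + e - y0)). lra. }
  set (f1 := fun t => u x t * v t y). set (f0 := fun t => u x0 t * v t y0).
  assert (Cf1 : forall t, J a b e t -> continuous f1 t).
  { intros t Ht. apply (cont_prod_slice a b e u v x y t Hu Hv Jx Jy Ht). }
  assert (Cf0 : forall t, J a b e t -> continuous f0 t).
  { intros t Ht. apply (cont_prod_slice a b e u v x0 y0 t Hu Hv Hx0 Hy0 Ht). }
  assert (I1 : ex_RInt f1 c x0) by (apply (ex_RInt_J a b e); auto).
  assert (I2 : ex_RInt f1 x0 x) by (apply (ex_RInt_J a b e); auto).
  assert (I0 : ex_RInt f0 c x0) by (apply (ex_RInt_J a b e); auto).
  assert (EQ : Q c u v x y - Q c u v x0 y0 = RInt (fun t => f1 t - f0 t) c x0 + RInt f1 x0 x).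
  { unfold Q. fold f1 f0.
    rewrite <- (RInt_Chasles f1 c x0 x I1 I2).
    replace (RInt (fun t => f1 t - f0 t) c x0) with (RInt f1 c x0 - RInt f0 c x0)
      by (symmetry; exact (RInt_minus f1 f0 c x0 I1 I0)).
    change (RInt f1 c x0 + RInt f1 x0 x - RInt f0 c x0 = RInt f1 c x0 - RInt f0 c x0 + RInt f1 x0 x).
    ring. }
  rewrite EQ.
  assert (E1 : Rabs (RInt (fun t => f1 t - f0 t) c x0) <= K * (eta * (Mv + 1) + Mu * eta)).
  { apply RInt_bound.
    - apply (ex_RInt_minus (V := R_NormedModule) f1 f0); auto.
    - intros t Ht.
      assert (Hut : Rabs (u x t - u x0 t) < eta).
      { pose proof (cond_pos d4). apply Rabs_def2 in Hxd4.
        apply (Hd4 t x0 t x Ht); try lra. rewrite Rminus_eq_0, Rabs_R0. lra. }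
      assert (Hvt : Rabs (v t y - v t y0) < eta).
      { pose proof (cond_pos d3). apply Rabs_def2 in Hyd3.
        apply (Hd3 t y0 t y Ht); try lra. rewrite Rminus_eq_0, Rabs_R0. lra. }
      pose proof (HMv t Ht) as Hv1. pose proof (HMu t Ht) as Hu1.
      assert (Hvty : Rabs (v t y) <= Mv + 1).
      { replace (v t y) with (v t y0 + (v t y - v t y0)) by ring.
        eapply Rle_trans. apply Rabs_triang. lra. }
      unfold f1, f0.
      replace (u x t * v t y - u x0 t * v t y0) with ((u x t - u x0 t) * v t y + u x0 t * (v t y - v t y0)) by ring.
      eapply Rle_trans. apply Rabs_triang. rewrite !Rabs_mult.
      apply Rplus_le_compat.
      + apply Rmult_le_compat; try apply Rabs_pos; lra.
      + apply Rmult_le_compat; try apply Rabs_pos; lra. }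
  assert (E2 : Rabs (RInt f1 x0 x) <= Rabs (x - x0) * M1).
  { apply RInt_bound; auto. intros t Ht.
    assert (Htx : Rabs (t - x0) <= Rabs (x - x0)).
    { apply between_abs; exact Ht. }
    pose proof (Hd1' x t Hxd1 ltac:(lra)) as H1.
    pose proof (Hd2' t y ltac:(lra) Hyd2) as H2.
    unfold f1, M1. rewrite Rabs_mult.
    apply Rmult_le_compat; try apply Rabs_pos.
    + replace (u x t) with (u x0 x0 + (u x t - u x0 x0)) by ring.
      eapply Rle_trans. apply Rabs_triang. lra.
    + replace (v t y) with (v x0 y0 + (v t y - v x0 y0)) by ring.
      eapply Rle_trans. apply Rabs_triang. lra. }
  assert (S1 : K * (eta * (Mv + 1) + Mu * eta) < eps / 2).
  { replace (K * (eta * (Mv + 1) + Mu * eta)) with (A * eta) by (unfold A; ring).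
    apply small_mul; auto. }
  assert (S2 : Rabs (x - x0) * M1 < eps / 2).
  { apply Rle_lt_trans with (d6 * M1).
    apply Rmult_le_compat_r; auto; lra.
    unfold d6. rewrite Rmult_comm. apply small_mul; auto. lra. }
  eapply Rle_lt_trans. apply Rabs_triang. lra.
Qed.


Definition D1 (f : R -> R -> R) := fun x y => Derive (fun t => f t y) x.
Definition D2 (f : R -> R -> R) := fun x y => Derive (fun t => f x t) y.
Definition Sm a b e f := forall k, Ck (Bx a b e) k f.

Lemma Sm_cont a b e f p : Sm a b e f -> Bx a b e p -> cont2 f p.
Proof. intros H Hp. apply (Ck_cont _ 0 f p (H 0%nat) Hp). Qed.
Lemma Sm_D1 a b e f : Sm a b e f -> Sm a b e (D1 f).
Proof. intros H k. destruct (H (S k)) as [_ [_ [H1 _]]]. exact H1. Qed.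
Lemma Sm_D2 a b e f : Sm a b e f -> Sm a b e (D2 f).
Proof. intros H k. destruct (H (S k)) as [_ [_ [_ H2]]]. exact H2. Qed.
Lemma Sm_dx a b e f x y : Sm a b e f -> J a b e x -> J a b e y -> ex_derive (fun t => f t y) x.
Proof. intros H Hx Hy. destruct (H 1%nat) as [_ [Hd _]]. apply (Hd (x, y)). split; auto. Qed.
Lemma Sm_dy a b e f x y : Sm a b e f -> J a b e x -> J a b e y -> ex_derive (fun t => f x t) y.
Proof. intros H Hx Hy. destruct (H 1%nat) as [_ [Hd _]]. apply (Hd (x, y)). split; auto. Qed.
Lemma Sm_ext a b e f g : (forall x y, J a b e x -> J a b e y -> f x y = g x y) -> Sm a b e f -> Sm a b e g.
Proof. intros E H k. apply (Ck_ext _ k f g (Bx_open a b e)); auto. intros [x y] [Hx Hy]; apply E; auto. Qed.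
Lemma Sm_plus a b e f g : Sm a b e f -> Sm a b e g -> Sm a b e (fun x y => f x y + g x y).
Proof. intros H1 H2 k. apply Ck_plus; auto. apply Bx_open. Qed.
Lemma Sm_minus a b e f g : Sm a b e f -> Sm a b e g -> Sm a b e (fun x y => f x y - g x y).
Proof. intros H1 H2 k. apply Ck_minus; auto. apply Bx_open. Qed.
Lemma Sm_mult a b e f g : Sm a b e f -> Sm a b e g -> Sm a b e (fun x y => f x y * g x y).
Proof. intros H1 H2 k. apply Ck_mult; auto. apply Bx_open. Qed.
Lemma Sm_const a b e c : Sm a b e (fun _ _ => c).
Proof. intros k. apply Ck_const. Qed.
Lemma Sm_sel1 a b e f c : J a b e c -> Sm a b e f -> Sm a b e (fun x _ => f x c).
Proof. intros Hc H k. apply Ck_sel1; auto. Qed.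
Lemma Sm_sel2 a b e f c : J a b e c -> Sm a b e f -> Sm a b e (fun _ y => f y c).
Proof. intros Hc H k. apply Ck_sel2; auto. Qed.
Lemma Sm_sel3 a b e f c : J a b e c -> Sm a b e f -> Sm a b e (fun x _ => f c x).
Proof. intros Hc H k. apply Ck_sel3; auto. Qed.

Lemma locJ a b e x : J a b e x -> locally x (fun t => J a b e t).
Proof.
  intros Hx. assert (H : 0 < Rmin (x - (a - e)) (b + e - x)) by (unfold J in Hx; apply Rmin_pos; lra).
  exists (mkposreal _ H). intros t Ht. apply ballR in Ht.
  assert (Ht' : Rabs (t - x) < Rmin (x - (a - e)) (b + e - x)) by exact Ht. clear Ht. rename Ht' into Ht.
  pose proof (Rmin_l (x - (a - e)) (b + e - x)). pose proof (Rmin_r (x - (a - e)) (b + e - x)).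
  apply Rabs_def2 in Ht. unfold J in *. lra.
Qed.

Lemma margin a b e x : J a b e x -> exists eps : posreal, forall t, x - eps <= t <= x + eps -> J a b e t.
Proof.
  intros Hx. assert (H : 0 < Rmin (x - (a - e)) (b + e - x) / 2) by (unfold J in Hx; apply Rdiv_lt_0_compat; [apply Rmin_pos|]; lra).
  exists (mkposreal _ H). intros t Ht.
  assert (Ht' : x - Rmin (x - (a - e)) (b + e - x) / 2 <= t <= x + Rmin (x - (a - e)) (b + e - x) / 2) by exact Ht. clear Ht. rename Ht' into Ht.
  pose proof (Rmin_l (x - (a - e)) (b + e - x)). pose proof (Rmin_r (x - (a - e)) (b + e - x)).
  unfold J in *. lra.
Qed.

Lemma loc2d a b e x y : J a b e x -> J a b e y -> locally_2d (fun u v => J a b e u /\ J a b e v) x y.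
Proof.
  intros Hx Hy. destruct (margin a b e x Hx) as [e1 H1]. destruct (margin a b e y Hy) as [e2 H2].
  exists (mkposreal _ (Rmin_pos _ _ (cond_pos e1) (cond_pos e2))). intros u v Hu Hv.
  change (Rabs (u - x) < Rmin e1 e2) in Hu. change (Rabs (v - y) < Rmin e1 e2) in Hv.
  pose proof (Rmin_l e1 e2). pose proof (Rmin_r e1 e2).
  apply Rabs_def2 in Hu. apply Rabs_def2 in Hv. split; [apply H1|apply H2]; lra.
Qed.

Lemma cont2_comp_sel (v : R -> R -> R) y t0 :
  cont2 v (t0, y) -> continuous (fun q : R * R => v (snd q) y) (fst (0, t0) , t0).
Proof.
  intros H. apply (continuous_comp_2 (fun q : R * R => snd q) (fun _ => y) v).
  apply continuous_snd. apply continuous_const. exact H.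
Qed.


Lemma c2d_D1prod a b e u v y x0 t0 : Sm a b e u -> Sm a b e v -> J a b e y -> J a b e x0 -> J a b e t0 ->
  continuity_2d_pt (fun x' t' => Derive (fun z => u z t' * v t' y) x') x0 t0.
Proof.
  intros Hu Hv Hy Hx Ht.
  assert (E: forall x' t', D1 u x' t' * v t' y = Derive (fun z => u z t' * v t' y) x').
  { intros x' t'. unfold D1. rewrite Derive_scal_l. reflexivity. }
  apply (continuity_2d_pt_ext (fun x' t' => D1 u x' t' * v t' y) _ x0 t0 E).
  apply (continuity_2d_pt_filterlim (fun x' t' => D1 u x' t' * v t' y)).
  assert (H1 : continuous (fun q : R * R => D1 u (fst q) (snd q)) (x0, t0)).
  { apply (Sm_cont a b e (D1 u) (x0, t0)). apply Sm_D1; auto. split; auto. }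
  assert (H2 : continuous (fun q : R * R => v (snd q) y) (x0, t0)).
  { apply (continuous_comp_2 (fun q : R * R => snd q) (fun _ => y) v).
    apply continuous_snd. apply continuous_const.
    apply (Sm_cont a b e v (t0, y)); auto. split; auto. }
  exact (continuous_mult _ _ _ H1 H2).
Qed.

Lemma c2d_D2prod a b e u v x y0 t0 : Sm a b e u -> Sm a b e v -> J a b e x -> J a b e y0 -> J a b e t0 ->
  continuity_2d_pt (fun y' t' => Derive (fun z => u x t' * v t' z) y') y0 t0.
Proof.
  intros Hu Hv Hx Hy Ht.
  assert (E: forall y' t', u x t' * D2 v t' y' = Derive (fun z => u x t' * v t' z) y').
  { intros y' t'. unfold D2. rewrite Derive_scal. reflexivity. }
  apply (continuity_2d_pt_ext (fun y' t' => u x t' * D2 v t' y') _ y0 t0 E).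
  apply (continuity_2d_pt_filterlim (fun y' t' => u x t' * D2 v t' y')).
  assert (H1 : continuous (fun q : R * R => u x (snd q)) (y0, t0)).
  { apply (continuous_comp_2 (fun _ => x) (fun q : R * R => snd q) u).
    apply continuous_const. apply continuous_snd.
    apply (Sm_cont a b e u (x, t0)); auto. split; auto. }
  assert (H2 : continuous (fun q : R * R => D2 v (snd q) (fst q)) (y0, t0)).
  { apply (continuous_comp_2 (fun q : R * R => snd q) (fun q : R * R => fst q) (D2 v)).
    apply continuous_snd. apply continuous_fst.
    apply (Sm_cont a b e (D2 v) (t0, y0)). apply Sm_D2; auto. split; auto. }
  exact (continuous_mult _ _ _ H1 H2).
Qed.

Lemma cont_prod a b e u v x y t : Sm a b e u -> Sm a b e v -> J a b e x -> J a b e y -> J a b e t ->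
  continuous (fun t => u x t * v t y) t.
Proof.
  intros Hu Hv Hx Hy Ht. apply (cont_prod_slice a b e u v x y t); auto.
  intros p Hp; apply (Sm_cont a b e); auto. intros p Hp; apply (Sm_cont a b e); auto.
Qed.

Lemma Qdy a b e c u v x y : Sm a b e u -> Sm a b e v -> J a b e c -> J a b e x -> J a b e y ->
  is_derive (fun y' => Q c u v x y') y (Q c u (D2 v) x y).
Proof.
  intros Hu Hv Hc Hx Hy. unfold Q.
  replace (RInt (fun t => u x t * D2 v t y) c x) with (RInt (fun t => Derive (fun z => u x t * v t z) y) c x).
  2:{ apply RInt_ext. intros t _. unfold D2. apply Derive_scal. }
  apply (is_derive_RInt_param (fun z t => u x t * v t z) c x y).
  - generalize (locJ a b e y Hy). apply filter_imp. intros y' Hy' t Ht.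
    apply ex_derive_scal. apply (Sm_dy a b e v); auto. exact (J_between a b e c x t Hc Hx Ht).
  - intros t Ht. apply (c2d_D2prod a b e); auto. exact (J_between a b e c x t Hc Hx Ht).
  - generalize (locJ a b e y Hy). apply filter_imp. intros y' Hy'.
    apply (ex_RInt_J a b e); auto. intros t Ht. apply (cont_prod a b e); auto.
Qed.

Lemma Qdx a b e c u v x y : Sm a b e u -> Sm a b e v -> J a b e c -> J a b e x -> J a b e y ->
  is_derive (fun x' => Q c u v x' y) x (Q c (D1 u) v x y + u x x * v x y).
Proof.
  intros Hu Hv Hc Hx Hy. unfold Q.
  destruct (margin a b e c Hc) as [ec Hec]. destruct (margin a b e x Hx) as [ex Hex].
  assert (H := is_derive_RInt_param_bound_comp (fun z t => u z t * v t y) (fun _ => c) (fun z => z) x 0 1).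
  replace (RInt (fun t => D1 u x t * v t y) c x + u x x * v x y) with
    (RInt (fun t => Derive (fun z => u z t * v t y) x) c x + - (u x c * v c y) * 0 + u x x * v x y * 1).
  2:{ f_equal. 2: ring. replace (- (u x c * v c y) * 0) with 0 by ring. rewrite Rplus_0_r.
      apply RInt_ext. intros t _. unfold D1. apply Derive_scal_l. }
  apply H; clear H.
  - generalize (locJ a b e x Hx). apply filter_imp. intros x' Hx'.
    apply (ex_RInt_J a b e); auto. intros t Ht. apply (cont_prod a b e); auto.
  - exists ec. generalize (locJ a b e x Hx). apply filter_imp. intros x' Hx'.
    apply (ex_RInt_J a b e); [intros t Ht; apply (cont_prod a b e); auto| |]; apply Hec; pose proof (cond_pos ec); lra.
  - exists ex. generalize (locJ a b e x Hx). apply filter_imp. intros x' Hx'.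
    apply (ex_RInt_J a b e); [intros t Ht; apply (cont_prod a b e); auto| |]; apply Hex; pose proof (cond_pos ex); lra.
  - exact (@is_derive_const R_AbsRing R_NormedModule c x).
  - exact (@is_derive_id R_AbsRing x).
  - exists (mkposreal _ (Rmin_pos _ _ (cond_pos ec) (cond_pos ex))).
    generalize (locJ a b e x Hx). apply filter_imp. intros x' Hx' t Ht.
    assert (Jt : J a b e t).
    { assert (Ht' : Rmin (c - Rmin ec ex) (x - Rmin ec ex) <= t <= Rmax (c + Rmin ec ex) (x + Rmin ec ex)) by exact Ht.
      clear Ht. set (m := Rmin ec ex) in *.
      assert (m <= ec) by apply Rmin_l. assert (m <= ex) by apply Rmin_r.
      assert (0 < m) by (apply Rmin_pos; apply cond_pos).
      assert (J1 : J a b e (Rmin (c - m) (x - m))) by (apply J_min; [apply Hec|apply Hex]; lra).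
      assert (J2 : J a b e (Rmax (c + m) (x + m))) by (apply J_max; [apply Hec|apply Hex]; lra).
      unfold J in *. lra. }
    apply (ex_derive_mult (fun z => u z t) (fun _ => v t y)).
    apply (Sm_dx a b e u); auto. apply ex_derive_const.
  - intros t Ht. apply (c2d_D1prod a b e); auto. exact (J_between a b e c x t Hc Hx Ht).
  - generalize (loc2d a b e x c Hx Hc). apply locally_2d_impl. apply locally_2d_forall.
    intros x' t [Hx' Ht]. apply (c2d_D1prod a b e); auto.
  - generalize (loc2d a b e x x Hx Hx). apply locally_2d_impl. apply locally_2d_forall.
    intros x' t [Hx' Ht]. apply (c2d_D1prod a b e); auto.
  - apply continuity_pt_filterlim. apply (cont_prod a b e); auto.
  - apply continuity_pt_filterlim. apply (cont_prod a b e); auto.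
Qed.


Lemma diag_eq a b e u c x y : Sm a b e u -> J a b e c -> J a b e x ->
  u x x = u x c + Q c (D2 u) (fun _ _ => 1) x y.
Proof.
  intros Hu Hc Hx. unfold Q.
  rewrite (RInt_ext _ (Derive (fun t => u x t))).
  2:{ intros t _. unfold D2. apply Rmult_1_r. }
  rewrite RInt_Derive. ring.
  - intros t Ht. apply (Sm_dy a b e); auto. exact (J_between a b e c x t Hc Hx Ht).
  - intros t Ht. apply (cont_slice2 (D2 u) x t).
    exact (Sm_cont a b e (D2 u) (x, t) (Sm_D2 a b e u Hu) (conj Hx (J_between a b e c x t Hc Hx Ht))).
Qed.

Lemma Q_Ck a b e k : forall c u v, J a b e c -> Sm a b e u -> Sm a b e v -> Ck (Bx a b e) k (Q c u v).
Proof.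
  induction k as [|k IH]; intros c u v Hc Hu Hv.
  - split; auto. intros [x y] [Hx Hy]. apply (Qcont a b e); auto.
    intros p Hp; exact (Sm_cont a b e u p Hu Hp). intros p Hp; exact (Sm_cont a b e v p Hv Hp).
  - split; [|split; [|split]].
    + intros [x y] [Hx Hy]. apply (Qcont a b e); auto.
      intros p Hp; exact (Sm_cont a b e u p Hu Hp). intros p Hp; exact (Sm_cont a b e v p Hv Hp).
    + intros [x y] [Hx Hy]. simpl. split.
      * eexists. apply (Qdx a b e); auto.
      * eexists. apply (Qdy a b e); auto.
    + apply (Ck_ext _ k (fun x y => Q c (D1 u) v x y + (u x c + Q c (D2 u) (fun _ _ => 1) x y) * v x y)).
      * apply Bx_open.
      * intros [x y] [Hx Hy]. cbn [fst snd]. symmetry. apply is_derive_unique.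
        rewrite <- (diag_eq a b e u c x y Hu Hc Hx). exact (Qdx a b e c u v x y Hu Hv Hc Hx Hy).
      * apply Ck_plus. apply Bx_open. apply IH; auto. apply Sm_D1; auto.
        apply Ck_mult. apply Bx_open. apply Ck_plus. apply Bx_open.
        apply Ck_sel1; auto. apply IH; auto. apply Sm_D2; auto. apply Sm_const. apply Hv.
    + apply (Ck_ext _ k (Q c u (D2 v))).
      * apply Bx_open.
      * intros [x y] [Hx Hy]. cbn [fst snd]. symmetry. apply is_derive_unique.
        exact (Qdy a b e c u v x y Hu Hv Hc Hx Hy).
      * apply IH; [exact Hc|exact Hu|apply Sm_D2; exact Hv].
Qed.

Lemma Sm_Q a b e c u v : J a b e c -> Sm a b e u -> Sm a b e v -> Sm a b e (Q c u v).
Proof. intros Hc Hu Hv k. apply Q_Ck; auto. Qed.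

Lemma Sm_diag a b e u : (exists c, J a b e c) -> Sm a b e u -> Sm a b e (fun x _ => u x x).
Proof.
  intros [c Hc] Hu. apply (Sm_ext a b e (fun x y => u x c + Q c (D2 u) (fun _ _ => 1) x y)).
  - intros x y Hx Hy. symmetry. apply (diag_eq a b e u c x y); auto.
  - apply Sm_plus. apply Sm_sel1; auto. apply Sm_Q; auto. apply Sm_D2; auto. apply Sm_const.
Qed.


Fixpoint D1n (n : nat) (F : R -> R -> R) : R -> R -> R :=
  match n with O => F | S n => D1 (D1n n F) end.

Lemma Sm_D1n a b e n F : Sm a b e F -> Sm a b e (D1n n F).
Proof. induction n; simpl; auto. intros H. apply Sm_D1; auto. Qed.

Lemma slice_n a b e F w : Sm a b e F -> J a b e w -> forall n s, J a b e s ->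
  ex_derive_n (fun t => F t w) n s /\ Derive_n (fun t => F t w) n s = D1n n F s w.
Proof.
  intros HF Hw n. induction n as [|n IH]; intros s Hs.
  - split; simpl; auto.
  - assert (L : locally s (fun t => Derive_n (fun t => F t w) n t = D1n n F t w)).
    { generalize (locJ a b e s Hs). apply filter_imp. intros t Ht. apply IH; auto. }
    split.
    + simpl. apply (ex_derive_ext_loc (fun t => D1n n F t w)).
      generalize L. apply filter_imp. intros t Ht; symmetry; exact Ht.
      apply (Sm_dx a b e); auto. apply Sm_D1n; auto.
    + simpl. unfold D1 at 1. apply Derive_ext_loc. exact L.
Qed.

Definition Sm1 a b e (h : R -> R) := Sm a b e (fun s _ => h s).

Lemma Sm1_exn a b e h : a - e < b + e -> Sm1 a b e h -> forall n s, J a b e s -> ex_derive_n h n s.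
Proof.
  intros Hab H n s Hs. apply (slice_n a b e (fun s _ => h s) s H Hs n s Hs).
Qed.

Lemma Sm1_loc a b e h n x : a - e < b + e -> Sm1 a b e h -> J a b e x ->
  locally x (fun y => forall k, (k <= n)%nat -> ex_derive_n h k y).
Proof.
  intros Hab H Hx. generalize (locJ a b e x Hx). apply filter_imp. intros y Hy k _.
  apply (Sm1_exn a b e); auto.
Qed.

Lemma Sm1_plus a b e f g : Sm1 a b e f -> Sm1 a b e g -> Sm1 a b e (fun t => f t + g t).
Proof. exact (Sm_plus a b e (fun s _ => f s) (fun s _ => g s)). Qed.
Lemma Sm1_mult a b e f g : Sm1 a b e f -> Sm1 a b e g -> Sm1 a b e (fun t => f t * g t).
Proof. exact (Sm_mult a b e (fun s _ => f s) (fun s _ => g s)). Qed.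
Lemma Sm1_minus a b e f g : Sm1 a b e f -> Sm1 a b e g -> Sm1 a b e (fun t => f t - g t).
Proof. exact (Sm_minus a b e (fun s _ => f s) (fun s _ => g s)). Qed.
Lemma Sm1_const a b e c : Sm1 a b e (fun _ => c).
Proof. exact (Sm_const a b e c). Qed.
Lemma Sm1_scal a b e c f : Sm1 a b e f -> Sm1 a b e (fun t => c * f t).
Proof. intros H. apply Sm1_mult; auto. apply Sm1_const. Qed.
Lemma Sm1_row a b e u x : J a b e x -> Sm a b e u -> Sm1 a b e (fun t => u x t).
Proof. intros Hx Hu. apply (Sm_sel3 a b e u x Hx Hu). Qed.
Lemma Sm1_col a b e v y : J a b e y -> Sm a b e v -> Sm1 a b e (fun t => v t y).
Proof. intros Hy Hv. apply (Sm_sel1 a b e v y Hy Hv). Qed.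

Lemma Derive_n_lin a b e f g al be n x : a - e < b + e -> Sm1 a b e f -> Sm1 a b e g -> J a b e x ->
  Derive_n (fun t => al * f t + be * g t) n x = al * Derive_n f n x + be * Derive_n g n x.
Proof.
  intros Hab Hf Hg Hx.
  rewrite (Derive_n_plus (fun t => al * f t) (fun t => be * g t)).
  - rewrite !Derive_n_scal_l. reflexivity.
  - apply (Sm1_loc a b e); auto. apply Sm1_scal; auto.
  - apply (Sm1_loc a b e); auto. apply Sm1_scal; auto.
Qed.

Definition Mi (i : nat) (u v : R -> R -> R) : R -> R -> R :=
  fun x y => Derive_n (fun t => u x t * v t y) i x.

Lemma Sm_M a b e i : a - e < b + e -> forall u v, Sm a b e u -> Sm a b e v -> Sm a b e (Mi i u v).
Proof.
  intros Hab. assert (HJ : exists c, J a b e c) by (exists ((a - e + (b + e)) / 2); unfold J; lra).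
  induction i as [|i IH]; intros u v Hu Hv.
  - apply (Sm_ext a b e (fun x y => u x x * v x y)).
    + intros; reflexivity.
    + apply Sm_mult; auto. apply Sm_diag; auto.
  - apply (Sm_ext a b e (fun x y => 1 * Mi i (D2 u) v x y + 1 * Mi i u (D1 v) x y)).
    + intros x y Hx Hy. unfold Mi.
      transitivity (Derive_n (fun t => 1 * (D2 u x t * v t y) + 1 * (u x t * D1 v t y)) i x).
      * symmetry. apply (Derive_n_lin a b e); auto.
        apply Sm1_mult. apply Sm1_row; auto. apply Sm_D2; auto. apply Sm1_col; auto.
        apply Sm1_mult. apply Sm1_row; auto. apply Sm1_col; auto. apply Sm_D1; auto.
      * rewrite <- Nat.add_1_r. rewrite <- Derive_n_comp.
        apply Derive_n_ext_loc.
        generalize (locJ a b e x Hx). apply filter_imp. intros t Ht. simpl.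
        rewrite (Derive_mult (fun t => u x t) (fun t => v t y)).
        unfold D1, D2. ring.
        apply (Sm_dy a b e); auto. apply (Sm_dx a b e); auto.
    + apply Sm_plus; apply Sm_mult; try apply Sm_const.
      apply IH; auto. apply Sm_D2; auto. apply IH; auto. apply Sm_D1; auto.
Qed.


Definition RE (f : R -> R -> C) := fun x y => Re (f x y).
Definition IM (f : R -> R -> C) := fun x y => Im (f x y).
Definition good a b e (f : R -> R -> C) := Sm a b e (RE f) /\ Sm a b e (IM f).
Definition good1 a b e (g : R -> C) := Sm1 a b e (fun t => Re (g t)) /\ Sm1 a b e (fun t => Im (g t)).
Definition goodD a b e (d : Dker) := good a b e (theta d) /\ List.Forall (good a b e) (deltas d).

Ltac toR := match goal with |- ?A = ?B => change (@eq R A B) end.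

Lemma Re_cDerive_n n g t : Re (cDerive_n n g t) = Derive_n (fun s => Re (g s)) n t.
Proof.
  revert t. induction n as [|n IH]; intros t; simpl; auto.
  unfold cDerive. simpl. apply Derive_ext. intros s. apply IH.
Qed.
Lemma Im_cDerive_n n g t : Im (cDerive_n n g t) = Derive_n (fun s => Im (g s)) n t.
Proof.
  revert t. induction n as [|n IH]; intros t; simpl; auto.
  unfold cDerive. simpl. apply Derive_ext. intros s. apply IH.
Qed.

Lemma Sm1_cont a b e h t : Sm1 a b e h -> J a b e t -> continuous h t.
Proof.
  intros H Ht. apply (cont_slice1 (fun s _ => h s) t t).
  exact (Sm_cont a b e _ (t, t) H (conj Ht Ht)).
Qed.

Lemma good1_prod a b e c x g : good a b e c -> J a b e x -> good1 a b e g ->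
  Sm1 a b e (fun t => Re (Cmult (c x t) (g t))) /\ Sm1 a b e (fun t => Im (Cmult (c x t) (g t))).
Proof.
  intros [Hr Hi] Hx [Gr Gi]. split.
  - exact (Sm1_minus a b e _ _ (Sm1_mult a b e _ _ (Sm1_row a b e _ x Hx Hr) Gr) (Sm1_mult a b e _ _ (Sm1_row a b e _ x Hx Hi) Gi)).
  - exact (Sm1_plus a b e _ _ (Sm1_mult a b e _ _ (Sm1_row a b e _ x Hx Hr) Gi) (Sm1_mult a b e _ _ (Sm1_row a b e _ x Hx Hi) Gr)).
Qed.

Lemma good1_lin a b e z1 z2 g1 g2 : good1 a b e g1 -> good1 a b e g2 ->
  good1 a b e (fun t => Cplus (Cmult z1 (g1 t)) (Cmult z2 (g2 t))).
Proof.
  intros [R1 I1] [R2 I2]. split.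
  - exact (Sm1_plus a b e _ _ (Sm1_minus a b e _ _ (Sm1_scal a b e (Re z1) _ R1) (Sm1_scal a b e (Im z1) _ I1))
                            (Sm1_minus a b e _ _ (Sm1_scal a b e (Re z2) _ R2) (Sm1_scal a b e (Im z2) _ I2))).
  - exact (Sm1_plus a b e _ _ (Sm1_plus a b e _ _ (Sm1_scal a b e (Re z1) _ I1) (Sm1_scal a b e (Im z1) _ R1))
                            (Sm1_plus a b e _ _ (Sm1_scal a b e (Re z2) _ I2) (Sm1_scal a b e (Im z2) _ R2))).
Qed.

Lemma RInt_lin (f g : R -> R) al be p q : ex_RInt f p q -> ex_RInt g p q ->
  RInt (fun t => al * f t + be * g t) p q = al * RInt f p q + be * RInt g p q.
Proof.
  intros Hf Hg.
  rewrite (RInt_plus (V := R_CompleteNormedModule) (fun t => al * f t) (fun t => be * g t)).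
  - replace (RInt (fun t => al * f t) p q) with (al * RInt f p q)
      by (symmetry; exact (RInt_scal (V := R_CompleteNormedModule) f p q al Hf)).
    replace (RInt (fun t => be * g t) p q) with (be * RInt g p q)
      by (symmetry; exact (RInt_scal (V := R_CompleteNormedModule) g p q be Hg)). reflexivity.
  - apply (ex_RInt_scal (V := R_NormedModule) f p q al Hf).
  - apply (ex_RInt_scal (V := R_NormedModule) g p q be Hg).
Qed.

Lemma RInt_lin4 (f1 f2 f3 f4 : R -> R) c1 c2 c3 c4 p q :
  ex_RInt f1 p q -> ex_RInt f2 p q -> ex_RInt f3 p q -> ex_RInt f4 p q ->
  RInt (fun t => c1 * f1 t + c2 * f2 t + (c3 * f3 t + c4 * f4 t)) p q =
  c1 * RInt f1 p q + c2 * RInt f2 p q + (c3 * RInt f3 p q + c4 * RInt f4 p q).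
Proof.
  intros H1 H2 H3 H4.
  rewrite (RInt_ext (V := R_CompleteNormedModule) _ (fun t => 1 * (c1 * f1 t + c2 * f2 t) + 1 * (c3 * f3 t + c4 * f4 t))).
  2:{ intros t _. simpl. ring. }
  rewrite RInt_lin.
  - rewrite (RInt_lin f1 f2 c1 c2 p q H1 H2), (RInt_lin f3 f4 c3 c4 p q H3 H4). toR. ring.
  - apply (ex_RInt_plus (V := R_NormedModule)); apply (ex_RInt_scal (V := R_NormedModule)); auto.
  - apply (ex_RInt_plus (V := R_NormedModule)); apply (ex_RInt_scal (V := R_NormedModule)); auto.
Qed.

Lemma Derive_n_lin4 a b e (f1 f2 f3 f4 : R -> R) c1 c2 c3 c4 n x : a - e < b + e ->
  Sm1 a b e f1 -> Sm1 a b e f2 -> Sm1 a b e f3 -> Sm1 a b e f4 -> J a b e x ->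
  Derive_n (fun t => c1 * f1 t + c2 * f2 t + (c3 * f3 t + c4 * f4 t)) n x =
  c1 * Derive_n f1 n x + c2 * Derive_n f2 n x + (c3 * Derive_n f3 n x + c4 * Derive_n f4 n x).
Proof.
  intros Hab H1 H2 H3 H4 Hx.
  rewrite (Derive_n_ext _ (fun t => 1 * (c1 * f1 t + c2 * f2 t) + 1 * (c3 * f3 t + c4 * f4 t))).
  2:{ intros; ring. }
  rewrite (Derive_n_lin a b e); auto.
  - rewrite !(Derive_n_lin a b e); auto. ring.
  - apply Sm1_plus; apply Sm1_scal; auto.
  - apply Sm1_plus; apply Sm1_scal; auto.
Qed.

Lemma ReCplus z w : Re (Cplus z w) = Re z + Re w.
Proof. reflexivity. Qed.
Lemma ImCplus z w : Im (Cplus z w) = Im z + Im w.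
Proof. reflexivity. Qed.

Lemma deltas_good a b e phi : a < b -> 0 < e -> good a b e phi ->
  forall l i, List.Forall (good a b e) l -> good a b e (fun x y => act_deltas l i (fun t => phi t y) x).
Proof.
  intros Hab He [Pr Pi] l. induction l as [|c l IH]; intros i Hl.
  - split; apply (Sm_ext a b e (fun _ _ => 0)); try (intros; reflexivity); apply Sm_const.
  - inversion Hl as [|c' l' [Cr Ci] Hl' E]; subst.
    destruct (IH (S i) Hl') as [Lr Li].
    assert (Hab' : a - e < b + e) by lra.
    split.
    + apply (Sm_ext a b e (fun x y => (1 * Mi i (RE c) (RE phi) x y + (-1) * Mi i (IM c) (IM phi) x y)
                                       + RE (fun x y => act_deltas l (S i) (fun t => phi t y) x) x y)).
      * intros x y Hx Hy. unfold RE. simpl act_deltas. rewrite ReCplus.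
        f_equal. rewrite (Re_cDerive_n i). unfold Mi.
        rewrite <- (Derive_n_lin a b e); auto.
        -- apply Derive_n_ext. intros t. unfold Cmult, RE, IM, Re, Im. simpl. ring.
        -- exact (Sm1_mult a b e _ _ (Sm1_row a b e (RE c) x Hx Cr) (Sm1_col a b e (RE phi) y Hy Pr)).
        -- exact (Sm1_mult a b e _ _ (Sm1_row a b e (IM c) x Hx Ci) (Sm1_col a b e (IM phi) y Hy Pi)).
      * apply Sm_plus; auto. apply Sm_plus; apply Sm_mult; try apply Sm_const; apply (Sm_M a b e); auto.
    + apply (Sm_ext a b e (fun x y => (1 * Mi i (RE c) (IM phi) x y + 1 * Mi i (IM c) (RE phi) x y)
                                       + IM (fun x y => act_deltas l (S i) (fun t => phi t y) x) x y)).
      * intros x y Hx Hy. unfold IM. simpl act_deltas. rewrite ImCplus.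
        f_equal. rewrite (Im_cDerive_n i). unfold Mi.
        rewrite <- (Derive_n_lin a b e); auto.
        -- apply Derive_n_ext. intros t. unfold Cmult, RE, IM, Re, Im. simpl. ring.
        -- exact (Sm1_mult a b e _ _ (Sm1_row a b e (RE c) x Hx Cr) (Sm1_col a b e (IM phi) y Hy Pi)).
        -- exact (Sm1_mult a b e _ _ (Sm1_row a b e (IM c) x Hx Ci) (Sm1_col a b e (RE phi) y Hy Pr)).
      * apply Sm_plus; auto. apply Sm_plus; apply Sm_mult; try apply Sm_const; apply (Sm_M a b e); auto.
Qed.

Lemma star_good a b e d phi : a < b -> 0 < e -> goodD a b e d -> good a b e phi ->
  good a b e (star_fun a d phi).
Proof.
  intros Hab He [[Tr Ti] Hl] Hphi.
  destruct (deltas_good a b e phi Hab He Hphi (deltas d) 0 Hl) as [Lr Li].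
  destruct Hphi as [Pr Pi].
  assert (Ja : J a b e a) by (unfold J; lra).
  assert (Hab' : a - e < b + e) by lra.
  split.
  - apply (Sm_ext a b e (fun x y => (1 * Q a (RE (theta d)) (RE phi) x y + (-1) * Q a (IM (theta d)) (IM phi) x y)
                                     + RE (fun x y => act_deltas (deltas d) 0 (fun t => phi t y) x) x y)).
    + intros x y Hx Hy. unfold RE, star_fun, act. rewrite ReCplus. f_equal.
      unfold cRInt, Q. simpl Re at 1.
      rewrite <- RInt_lin.
      * apply RInt_ext. intros t _. unfold Cmult, RE, IM, Re, Im. simpl. ring.
      * apply (ex_RInt_J a b e); auto. intros t Ht. exact (cont_prod a b e (RE (theta d)) (RE phi) x y t Tr Pr Hx Hy Ht).
      * apply (ex_RInt_J a b e); auto. intros t Ht. exact (cont_prod a b e (IM (theta d)) (IM phi) x y t Ti Pi Hx Hy Ht).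
    + apply Sm_plus; auto. apply Sm_plus; apply Sm_mult; try apply Sm_const; apply (Sm_Q a b e); auto.
  - apply (Sm_ext a b e (fun x y => (1 * Q a (RE (theta d)) (IM phi) x y + 1 * Q a (IM (theta d)) (RE phi) x y)
                                     + IM (fun x y => act_deltas (deltas d) 0 (fun t => phi t y) x) x y)).
    + intros x y Hx Hy. unfold IM, star_fun, act. rewrite ImCplus. f_equal.
      unfold cRInt, Q. simpl Im at 1.
      rewrite <- RInt_lin.
      * apply RInt_ext. intros t _. unfold Cmult, RE, IM, Re, Im. simpl. ring.
      * apply (ex_RInt_J a b e); auto. intros t Ht. exact (cont_prod a b e (RE (theta d)) (IM phi) x y t Tr Pi Hx Hy Ht).
      * apply (ex_RInt_J a b e); auto. intros t Ht. exact (cont_prod a b e (IM (theta d)) (RE phi) x y t Ti Pr Hx Hy Ht).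
    + apply Sm_plus; auto. apply Sm_plus; apply Sm_mult; try apply Sm_const; apply (Sm_Q a b e); auto.
Qed.


Definition clin (z1 z2 : C) (g1 g2 : R -> C) := fun t => Cplus (Cmult z1 (g1 t)) (Cmult z2 (g2 t)).

Lemma ReLin z1 z2 A B : Re (Cplus (Cmult z1 A) (Cmult z2 B)) =
  Re z1 * Re A + (- Im z1) * Im A + (Re z2 * Re B + (- Im z2) * Im B).
Proof. unfold Cplus, Cmult, Re, Im; simpl; ring. Qed.
Lemma ImLin z1 z2 A B : Im (Cplus (Cmult z1 A) (Cmult z2 B)) =
  Im z1 * Re A + Re z1 * Im A + (Im z2 * Re B + Re z2 * Im B).
Proof. unfold Cplus, Cmult, Re, Im; simpl; ring. Qed.

Lemma C_eq (z w : C) : Re z = Re w -> Im z = Im w -> z = w.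
Proof. destruct z, w; unfold Re, Im; simpl; intros; subst; reflexivity. Qed.

Lemma cD_lin a b e c x i z1 z2 g1 g2 : a < b -> 0 < e -> good a b e c -> J a b e x ->
  good1 a b e g1 -> good1 a b e g2 ->
  cDerive_n i (fun t => Cmult (c x t) (clin z1 z2 g1 g2 t)) x =
  Cplus (Cmult z1 (cDerive_n i (fun t => Cmult (c x t) (g1 t)) x))
        (Cmult z2 (cDerive_n i (fun t => Cmult (c x t) (g2 t)) x)).
Proof.
  intros Hab He Hc Hx H1 H2.
  assert (Hab' : a - e < b + e) by lra.
  destruct (good1_prod a b e c x g1 Hc Hx H1) as [P1 Q1].
  destruct (good1_prod a b e c x g2 Hc Hx H2) as [P2 Q2].
  apply C_eq.
  - rewrite ReLin, !Re_cDerive_n, !Im_cDerive_n.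
    rewrite <- (Derive_n_lin4 a b e); auto.
    apply Derive_n_ext. intros t. unfold clin, Cplus, Cmult, Re, Im; simpl; ring.
  - rewrite ImLin, !Re_cDerive_n, !Im_cDerive_n.
    rewrite <- (Derive_n_lin4 a b e); auto.
    apply Derive_n_ext. intros t. unfold clin, Cplus, Cmult, Re, Im; simpl; ring.
Qed.

Lemma cI_lin a b e c x z1 z2 g1 g2 : a < b -> 0 < e -> good a b e c -> J a b e x ->
  good1 a b e g1 -> good1 a b e g2 ->
  cRInt (fun t => Cmult (c x t) (clin z1 z2 g1 g2 t)) a x =
  Cplus (Cmult z1 (cRInt (fun t => Cmult (c x t) (g1 t)) a x))
        (Cmult z2 (cRInt (fun t => Cmult (c x t) (g2 t)) a x)).
Proof.
  intros Hab He Hc Hx H1 H2.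
  assert (Ja : J a b e a) by (unfold J; lra).
  destruct (good1_prod a b e c x g1 Hc Hx H1) as [P1 Q1].
  destruct (good1_prod a b e c x g2 Hc Hx H2) as [P2 Q2].
  assert (I : forall h, Sm1 a b e h -> ex_RInt h a x).
  { intros h Hh. apply (ex_RInt_J a b e); auto. intros t Ht. apply (Sm1_cont a b e); auto. }
  apply C_eq.
  - rewrite ReLin. unfold cRInt, Re, Im. cbn [fst snd].
    rewrite <- RInt_lin4; auto.
    apply RInt_ext. intros t _. unfold clin, Cplus, Cmult, Re, Im; simpl; ring.
  - rewrite ImLin. unfold cRInt, Re, Im. cbn [fst snd].
    rewrite <- RInt_lin4; auto.
    apply RInt_ext. intros t _. unfold clin, Cplus, Cmult, Re, Im; simpl; ring.
Qed.

Lemma deltas_lin a b e x z1 z2 g1 g2 : a < b -> 0 < e -> J a b e x ->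
  good1 a b e g1 -> good1 a b e g2 -> forall l i, List.Forall (good a b e) l ->
  act_deltas l i (clin z1 z2 g1 g2) x =
  Cplus (Cmult z1 (act_deltas l i g1 x)) (Cmult z2 (act_deltas l i g2 x)).
Proof.
  intros Hab He Hx H1 H2 l. induction l as [|c l IH]; intros i Hl.
  - simpl. apply C_eq; unfold Cplus, Cmult, RtoC, Re, Im; simpl; ring.
  - inversion Hl as [|c' l' Hc Hl' E]; subst. simpl.
    rewrite (IH (S i) Hl'). rewrite (cD_lin a b e c x i z1 z2 g1 g2); auto.
    apply C_eq; unfold Cplus, Cmult, Re, Im; simpl; ring.
Qed.

Lemma act_lin a b e d x z1 z2 g1 g2 : a < b -> 0 < e -> goodD a b e d -> J a b e x ->
  good1 a b e g1 -> good1 a b e g2 ->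
  act a d (clin z1 z2 g1 g2) x = Cplus (Cmult z1 (act a d g1 x)) (Cmult z2 (act a d g2 x)).
Proof.
  intros Hab He [Ht Hl] Hx H1 H2. unfold act.
  rewrite (cI_lin a b e (theta d) x z1 z2 g1 g2); auto.
  rewrite (deltas_lin a b e x z1 z2 g1 g2); auto.
  apply C_eq; unfold Cplus, Cmult, Re, Im; simpl; ring.
Qed.

Lemma act_loc a b e d x g1 g2 : a < b -> 0 < e -> J a b e x ->
  (forall t, J a b e t -> g1 t = g2 t) -> act a d g1 x = act a d g2 x.
Proof.
  intros Hab He Hx E. assert (Ja : J a b e a) by (unfold J; lra).
  unfold act. f_equal.
  - unfold cRInt. f_equal; apply RInt_ext; intros t Ht; rewrite E; auto;
      apply (J_between a b e a x t Ja Hx); lra.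
  - generalize 0%nat. induction (deltas d) as [|c l IH]; intros i; simpl; auto.
    f_equal; auto.
    assert (L : locally x (fun t => Cmult (c x t) (g1 t) = Cmult (c x t) (g2 t))).
    { generalize (locJ a b e x Hx). apply filter_imp. intros t Ht. rewrite E; auto. }
    apply C_eq; rewrite ?Re_cDerive_n, ?Im_cDerive_n; apply Derive_n_ext_loc;
      generalize L; apply filter_imp; intros t Ht; rewrite Ht; reflexivity.
Qed.

Lemma Z0 a b g x : a < b -> ex_derive g x -> (forall t, a <= t <= b -> g t = 0) -> a <= x <= b ->
  Derive g x = 0.
Proof.
  intros Hab [l Hl] Hz Hx. rewrite (is_derive_unique _ _ _ Hl).
  apply is_derive_Reals in Hl.
  destruct (Req_dec l 0) as [E|NE]; auto. exfalso.
  destruct (Hl (Rabs l) (Rabs_pos_lt _ NE)) as [dl Hd].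
  pose proof (cond_pos dl) as Hdl.
  destruct (Rlt_dec x b) as [Hxb|Hxb].
  - set (h := Rmin (dl / 2) (b - x)).
    assert (h0 : 0 < h) by (unfold h; apply Rmin_pos; lra).
    assert (h1 : h <= dl / 2) by apply Rmin_l. assert (h2 : h <= b - x) by apply Rmin_r.
    specialize (Hd h ltac:(lra) ltac:(rewrite Rabs_right; lra)).
    rewrite (Hz (x + h)) in Hd by lra. rewrite (Hz x) in Hd by lra.
    replace ((0 - 0) / h - l) with (- l) in Hd by (field; lra).
    rewrite Rabs_Ropp in Hd. lra.
  - set (h := - Rmin (dl / 2) (x - a)).
    assert (h0 : 0 < Rmin (dl / 2) (x - a)) by (apply Rmin_pos; lra).
    assert (h1 : Rmin (dl / 2) (x - a) <= dl / 2) by apply Rmin_l.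
    assert (h2 : Rmin (dl / 2) (x - a) <= x - a) by apply Rmin_r.
    specialize (Hd h ltac:(unfold h; lra) ltac:(unfold h; rewrite Rabs_Ropp, Rabs_right; lra)).
    rewrite (Hz (x + h)) in Hd by (unfold h; lra). rewrite (Hz x) in Hd by lra.
    replace ((0 - 0) / h - l) with (- l) in Hd by (field; unfold h; lra).
    rewrite Rabs_Ropp in Hd. lra.
Qed.

Lemma Z1 a b e h : a < b -> 0 < e -> Sm1 a b e h -> (forall t, a <= t <= b -> h t = 0) ->
  forall n x, a <= x <= b -> Derive_n h n x = 0.
Proof.
  intros Hab He Hh Hz n. induction n as [|n IH]; intros x Hx.
  - simpl. auto.
  - simpl. apply (Z0 a b); auto.
    apply (Sm1_exn a b e h ltac:(lra) Hh (S n) x). unfold J; lra.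
Qed.

Lemma act_zero a b e d g x : a < b -> 0 < e -> goodD a b e d -> good1 a b e g ->
  (forall t, a <= t <= b -> g t = RtoC 0) -> a <= x <= b -> act a d g x = RtoC 0.
Proof.
  intros Hab He [Ht Hl] Hg Hz Hx. assert (Jx : J a b e x) by (unfold J; lra).
  unfold act.
  replace (cRInt (fun t => Cmult (theta d x t) (g t)) a x) with (RtoC 0).
  2:{ unfold cRInt. apply C_eq; unfold RtoC, Re, Im; simpl.
      - rewrite (RInt_ext _ (fun _ => 0)). rewrite RInt_const. unfold scal; simpl; unfold mult; simpl; ring.
        intros t Ht'. rewrite Rmin_left, Rmax_right in Ht' by lra. rewrite Hz by lra.
        unfold Cmult, RtoC; simpl; ring.
      - rewrite (RInt_ext _ (fun _ => 0)). rewrite RInt_const. unfold scal; simpl; unfold mult; simpl; ring.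
        intros t Ht'. rewrite Rmin_left, Rmax_right in Ht' by lra. rewrite Hz by lra.
        unfold Cmult, RtoC; simpl; ring. }
  replace (act_deltas (deltas d) 0 g x) with (RtoC 0).
  { apply C_eq; unfold Cplus, RtoC, Re, Im; simpl; ring. }
  generalize 0%nat. induction Hl as [|c l Hc Hl IH]; intros i; simpl; auto.
  rewrite <- IH.
  destruct (good1_prod a b e c x g Hc Jx Hg) as [P1 Q1].
  apply C_eq; unfold Cplus, RtoC; [change (0 = Re (cDerive_n i (fun t => Cmult (c x t) (g t)) x) + 0)
                                   |change (0 = Im (cDerive_n i (fun t => Cmult (c x t) (g t)) x) + 0)];
    [rewrite Re_cDerive_n|rewrite Im_cDerive_n];
    rewrite (Z1 a b e); auto; try ring;
    intros t Ht'; rewrite Hz; auto; unfold Cmult, RtoC, Re, Im; simpl; ring.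
Qed.


Lemma open_Bx a b r : open (Bx a b r).
Proof. intros p Hp. apply loc2; auto. apply Bx_open. Qed.

Lemma box_of_open a b (U : R * R -> Prop) : a <= b -> open U -> (forall x y, inI2 a b x y -> U (x, y)) ->
  exists r, 0 < r /\ forall p, Bx a b r p -> U p.
Proof.
  intros Hab HU HI.
  assert (Hex : forall u v, exists r : posreal, inI2 a b u v ->
             forall x y, Rabs (x - u) < 2 * r -> Rabs (y - v) < 2 * r -> U (x, y)).
  { intros u v. destruct (classic (inI2 a b u v)) as [Hi|Hn].
    - destruct (HU (u, v) (HI u v Hi)) as [eps Heps].
      assert (H2 : 0 < eps / 2) by (pose proof (cond_pos eps); lra).
      exists (mkposreal _ H2). intros _ x y Hx Hy. apply (Heps (x, y)). split.
      + apply ballR. simpl. simpl in Hx. replace (2 * (eps / 2)) with (pos eps) in Hx by field. exact Hx.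
      + apply ballR. simpl. simpl in Hy. replace (2 * (eps / 2)) with (pos eps) in Hy by field. exact Hy.
    - exists (mkposreal 1 Rlt_0_1). intros Hi; contradiction. }
  set (delta := fun u v => proj1_sig (constructive_indefinite_description _ (Hex u v))).
  assert (Hdelta : forall u v, inI2 a b u v -> forall x y, Rabs (x - u) < 2 * delta u v -> Rabs (y - v) < 2 * delta u v -> U (x, y)).
  { intros u v. unfold delta. destruct (constructive_indefinite_description _ (Hex u v)) as [r Hr]. simpl. exact Hr. }
  destruct (compactness_value_2d a b a b delta) as [d Hd].
  exists (d / 2). split. pose proof (cond_pos d); lra.
  intros [x y] [Hx Hy]. unfold J in Hx, Hy. simpl in Hx, Hy.
  set (x' := Rmax a (Rmin b x)). set (y' := Rmax a (Rmin b y)).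
  assert (Hx' : a <= x' <= b /\ Rabs (x - x') < d / 2).
  { pose proof (cond_pos d). unfold x', Rmax, Rmin. destruct (Rle_dec b x); destruct (Rle_dec a _); split; try lra; unfold Rabs; destruct Rcase_abs; lra. }
  assert (Hy' : a <= y' <= b /\ Rabs (y - y') < d / 2).
  { pose proof (cond_pos d). unfold y', Rmax, Rmin. destruct (Rle_dec b y); destruct (Rle_dec a _); split; try lra; unfold Rabs; destruct Rcase_abs; lra. }
  destruct Hx' as [Hx'1 Hx'2]. destruct Hy' as [Hy'1 Hy'2].
  apply NNPP. intros HnU. apply (Hd x' y' Hx'1 Hy'1). intros [u [v [Hu [Hv [H1 [H2 H3]]]]]].
  apply HnU. pose proof (cond_pos (delta u v)). pose proof (cond_pos d). apply (Hdelta u v (conj Hu Hv)).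
  - replace (x - u) with ((x - x') + (x' - u)) by ring.
    eapply Rle_lt_trans. apply Rabs_triang. lra.
  - replace (y - v) with ((y - y') + (y' - v)) by ring.
    eapply Rle_lt_trans. apply Rabs_triang. lra.
Qed.

Lemma good_of_nbhd a b f : a <= b -> smooth_nbhd a b f -> exists r, 0 < r /\ good a b r f.
Proof.
  intros Hab [U [HU [HI Hk]]].
  destruct (box_of_open a b U Hab HU HI) as [r [Hr HB]].
  exists r. split; auto. split; intros k; apply (Ck_restr U); auto; apply Hk.
Qed.

Lemma good_mono a b r r' f : r' <= r -> good a b r f -> good a b r' f.
Proof.
  intros Hle [H1 H2]. assert (S : forall p, Bx a b r' p -> Bx a b r p).
  { intros [x y] [Hx Hy]; unfold Bx, J in *; simpl in *; split; lra. }
  split; intros k; apply (Ck_restr (Bx a b r)); auto.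
Qed.

Lemma goodL_of_nbhd a b l : a <= b -> List.Forall (smooth_nbhd a b) l ->
  exists r, 0 < r /\ forall r', 0 < r' <= r -> List.Forall (good a b r') l.
Proof.
  intros Hab Hl. induction Hl as [|f l Hf Hl IH].
  - exists 1. split. lra. intros; constructor.
  - destruct IH as [r1 [Hr1 H1]]. destruct (good_of_nbhd a b f Hab Hf) as [r2 [Hr2 H2]].
    exists (Rmin r1 r2). split. apply Rmin_pos; auto.
    intros r' [Hr' Hle]. pose proof (Rmin_l r1 r2). pose proof (Rmin_r r1 r2). constructor.
    + apply (good_mono a b r2); auto. lra.
    + apply H1. lra.
Qed.

Lemma goodD_of_inD a b d : a <= b -> inD a b d ->
  exists r, 0 < r /\ forall r', 0 < r' <= r -> goodD a b r' d.
Proof.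
  intros Hab [Ht Hl].
  destruct (good_of_nbhd a b _ Hab Ht) as [r1 [Hr1 H1]].
  destruct (goodL_of_nbhd a b _ Hab Hl) as [r2 [Hr2 H2]].
  exists (Rmin r1 r2). split. apply Rmin_pos; auto.
  intros r' [Hr' Hle]. pose proof (Rmin_l r1 r2). pose proof (Rmin_r r1 r2). split.
  - apply (good_mono a b r1); auto. lra.
  - apply H2. lra.
Qed.

Lemma smooth_of_good a b r f : 0 < r -> good a b r f -> smooth_nbhd a b f.
Proof.
  intros Hr [H1 H2]. exists (Bx a b r). split. apply open_Bx. split.
  - intros x y [Hx Hy]. unfold Bx, J, inI in *; simpl; lra.
  - intros k. split; [apply H1|apply H2].
Qed.

Lemma good1_ext a b r g1 g2 : (forall t, J a b r t -> g1 t = g2 t) -> good1 a b r g1 -> good1 a b r g2.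
Proof.
  intros E [H1 H2]. split.
  - apply (Sm_ext a b r (fun s _ => Re (g1 s))); auto. intros x y Hx Hy; rewrite E; auto.
  - apply (Sm_ext a b r (fun s _ => Im (g1 s))); auto. intros x y Hx Hy; rewrite E; auto.
Qed.

Lemma good1_col a b r f y : J a b r y -> good a b r f -> good1 a b r (fun t => f t y).
Proof. intros Hy [H1 H2]. split; [exact (Sm1_col a b r (RE f) y Hy H1)|exact (Sm1_col a b r (IM f) y Hy H2)]. Qed.

Lemma good1_mul a b r g h : good1 a b r g -> good1 a b r h -> good1 a b r (fun t => Cmult (g t) (h t)).
Proof.
  intros [G1 G2] [H1 H2]. split.
  - exact (Sm1_minus a b r _ _ (Sm1_mult a b r _ _ G1 H1) (Sm1_mult a b r _ _ G2 H2)).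
  - exact (Sm1_plus a b r _ _ (Sm1_mult a b r _ _ G1 H2) (Sm1_mult a b r _ _ G2 H1)).
Qed.

Lemma good1_conj a b r g : good1 a b r g -> good1 a b r (fun t => Cconj (g t)).
Proof.
  intros [G1 G2]. split. exact G1.
  apply (Sm_ext a b r (fun s _ => (-1) * Im (g s))). intros; unfold Cconj, Im; simpl; ring.
  exact (Sm1_scal a b r (-1) _ G2).
Qed.

Lemma good_of_good1 a b r g h : a < b -> 0 < r -> good1 a b r g -> good1 a b r h ->
  good a b r (fun x y => Cmult (g x) (h y)).
Proof.
  intros Hab Hr [G1 G2] [H1 H2].
  assert (c : J a b r a) by (unfold J; lra).
  assert (S1 : forall f, Sm1 a b r f -> Sm a b r (fun x _ => f x)) by (intros f Hf; exact Hf).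
  assert (S2 : forall f, Sm1 a b r f -> Sm a b r (fun _ y => f y)).
  { intros f Hf. exact (Sm_sel2 a b r (fun s _ => f s) a c Hf). }
  split.
  - exact (Sm_minus a b r _ _ (Sm_mult a b r _ _ (S1 _ G1) (S2 _ H1)) (Sm_mult a b r _ _ (S1 _ G2) (S2 _ H2))).
  - exact (Sm_plus a b r _ _ (Sm_mult a b r _ _ (S1 _ G1) (S2 _ H2)) (Sm_mult a b r _ _ (S1 _ G2) (S2 _ H1))).
Qed.

Lemma RInt_zero_pos a b h : a < b -> (forall x, a <= x <= b -> continuous h x) ->
  (forall x, a <= x <= b -> 0 <= h x) -> RInt h a b = 0 -> forall x, a <= x <= b -> h x = 0.
Proof.
  intros Hab Hc Hp HI x0 Hx0. destruct (Hp x0 Hx0) as [Hlt|Heq]; [|auto]. exfalso.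
  destruct (cont1_eps h x0 (Hc x0 Hx0) (h x0 / 2) ltac:(lra)) as [dl [Hdl Hd]].
  set (p := Rmax a (x0 - dl / 2)). set (q := Rmin b (x0 + dl / 2)).
  assert (Hp1 : a <= p) by apply Rmax_l. assert (Hq1 : q <= b) by apply Rmin_l.
  assert (Hpq : p < q).
  { clear Hp1 Hq1. unfold p, q, Rmax, Rmin. destruct (Rle_dec _ _) as [A1|A1]; destruct (Rle_dec _ _) as [A2|A2]; lra. }
  assert (Hin : forall t, p <= t <= q -> Rabs (t - x0) < dl).
  { intros t Ht. unfold p, q, Rmax, Rmin in Ht.
    destruct (Rle_dec _ _); destruct (Rle_dec _ _); unfold Rabs; destruct Rcase_abs; lra. }
  assert (Cab : forall u v, a <= u -> v <= b -> u <= v -> (forall z, Rmin u v <= z <= Rmax u v -> continuous h z)).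
  { intros u v Hu Hv Huv z Hz. apply Hc. rewrite Rmin_left, Rmax_right in Hz by lra. lra. }
  assert (I1 : ex_RInt h a p) by (apply (ex_RInt_continuous (V := R_CompleteNormedModule)); apply Cab; lra).
  assert (I2 : ex_RInt h p q) by (apply (ex_RInt_continuous (V := R_CompleteNormedModule)); apply Cab; lra).
  assert (I3 : ex_RInt h q b) by (apply (ex_RInt_continuous (V := R_CompleteNormedModule)); apply Cab; lra).
  assert (P1 : 0 <= RInt h a p) by (apply RInt_ge_0; auto; intros; apply Hp; lra).
  assert (P3 : 0 <= RInt h q b) by (apply RInt_ge_0; auto; intros; apply Hp; lra).
  assert (P2 : 0 < RInt h p q).
  { apply RInt_gt_0; auto.
    - intros t Ht. pose proof (Hd t (Hin t ltac:(lra))). apply Rabs_def2 in H. lra.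
    - intros t Ht. apply Hc. lra. }
  assert (E : RInt h a b = RInt h a p + RInt h p q + RInt h q b).
  { rewrite <- (RInt_Chasles h a q b (ex_RInt_Chasles h a p q I1 I2) I3).
    rewrite <- (RInt_Chasles h a p q I1 I2). reflexivity. }
  lra.
Qed.

Lemma normsq_zero a b r g : a < b -> 0 < r -> good1 a b r g ->
  RInt (fun x => Re (g x) * Re (g x) + Im (g x) * Im (g x)) a b = 0 ->
  forall x, a <= x <= b -> g x = RtoC 0.
Proof.
  intros Hab Hr [G1 G2] HI x Hx.
  assert (Z := RInt_zero_pos a b (fun x => Re (g x) * Re (g x) + Im (g x) * Im (g x)) Hab).
  assert (Cx : forall x, a <= x <= b -> continuous (fun x => Re (g x) * Re (g x) + Im (g x) * Im (g x)) x).
  { intros z Hz. assert (Jz : J a b r z) by (unfold J; lra).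
    pose proof (Sm1_cont a b r _ z G1 Jz) as C1. pose proof (Sm1_cont a b r _ z G2 Jz) as C2.
    exact (continuous_plus _ _ _ (continuous_mult _ _ _ C1 C1) (continuous_mult _ _ _ C2 C2)). }
  specialize (Z Cx ltac:(intros; nra) HI x Hx). simpl in Z.
  apply C_eq; unfold RtoC, Re, Im in *; simpl; nra.
Qed.


Lemma cRInt_Re f u v : Re (cRInt f u v) = RInt (fun t => Re (f t)) u v.
Proof. reflexivity. Qed.

Lemma lin_zero A B : Cplus (Cmult (RtoC 1) A) (Cmult (RtoC (-1)) B) = RtoC 0 -> A = B.
Proof.
  destruct A as [a1 a2], B as [b1 b2]. unfold Cplus, Cmult, RtoC. simpl. intros Heq.
  injection Heq; intros. f_equal; lra.
Qed.

Lemma common a b d E fs : a < b -> inD a b d -> inD a b E -> List.Forall (smooth_nbhd a b) fs ->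
  exists r, 0 < r /\ goodD a b r d /\ goodD a b r E /\ List.Forall (good a b r) fs.
Proof.
  intros Hab Hd HE Hf.
  destruct (goodD_of_inD a b d ltac:(lra) Hd) as [r1 [Hr1 H1]].
  destruct (goodD_of_inD a b E ltac:(lra) HE) as [r2 [Hr2 H2]].
  destruct (goodL_of_nbhd a b fs ltac:(lra) Hf) as [r3 [Hr3 H3]].
  exists (Rmin r1 (Rmin r2 r3)).
  pose proof (Rmin_l r1 (Rmin r2 r3)). pose proof (Rmin_r r1 (Rmin r2 r3)).
  pose proof (Rmin_l r2 r3). pose proof (Rmin_r r2 r3).
  assert (0 < Rmin r1 (Rmin r2 r3)) by (repeat apply Rmin_pos; auto).
  split; auto. split; [apply H1|split; [apply H2|apply H3]]; lra.
Qed.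

Lemma inI_J a b r x : 0 < r -> inI a b x -> J a b r x.
Proof. unfold inI, J; lra. Qed.

Lemma good1_clin a b r y f g : J a b r y -> good a b r f -> good a b r g ->
  good1 a b r (clin (RtoC 1) (RtoC (-1)) (fun t => f t y) (fun t => g t y)).
Proof. intros Hy Hf Hg. apply good1_lin; apply good1_col; auto. Qed.

Lemma clin_zero_pt A B : A = B -> Cplus (Cmult (RtoC 1) A) (Cmult (RtoC (-1)) B) = RtoC 0.
Proof. intros ->. apply C_eq; unfold Cplus, Cmult, RtoC, Re, Im; simpl; ring. Qed.

Theorem theorem6 (a b : R) (hab : a < b) (d : Dker) :
  starInv a b d -> additive_aut_Cinf a b (star_fun a d).
Proof.
  intros [HdD [E [HED [Hde Hed]]]].
  split; [|split; [|split; [|split]]].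
  -
    intros phi Hphi.
    destruct (common a b d E (phi :: nil) hab HdD HED ltac:(constructor; auto)) as [r [Hr [Gd [GE Gl]]]].
    inversion Gl as [|? ? Gphi _]; subst.
    exists (star_fun a d phi). split; [|auto].
    apply (smooth_of_good a b r); auto. apply star_good; auto.
  -
    intros phi psi Hphi Hpsi Heq x y Hxy.
    destruct (common a b d E (phi :: psi :: nil) hab HdD HED ltac:(repeat constructor; auto)) as [r [Hr [Gd [GE Gl]]]].
    pose proof (List.Forall_inv Gl) as Gphi. pose proof (List.Forall_inv (List.Forall_inv_tail Gl)) as Gpsi.
    destruct Hxy as [Hx Hy]. assert (Jy : J a b r y) by (apply inI_J; auto).
    assert (Jx : J a b r x) by (apply inI_J; auto).
    apply lin_zero. unfold star_fun.
    rewrite <- (act_lin a b r d x); auto; try (apply good1_col; auto).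
    apply (act_zero a b r); auto. apply good1_clin; auto.
    intros t Ht. unfold clin. apply clin_zero_pt. apply Heq. split; auto.
  -
    intros phi psi Hphi Hpsi x y Hxy.
    destruct (common a b d E (phi :: psi :: nil) hab HdD HED ltac:(repeat constructor; auto)) as [r [Hr [Gd [GE Gl]]]].
    pose proof (List.Forall_inv Gl) as Gphi. pose proof (List.Forall_inv (List.Forall_inv_tail Gl)) as Gpsi.
    destruct Hxy as [Hx Hy]. assert (Jy : J a b r y) by (apply inI_J; auto).
    assert (Jx : J a b r x) by (apply inI_J; auto).
    unfold star_fun.
    rewrite (act_loc a b r d x _ (clin (RtoC 1) (RtoC 1) (fun t => phi t y) (fun t => psi t y))); auto.
    + rewrite (act_lin a b r d x); auto; try (apply good1_col; auto).
      apply C_eq; unfold Cplus, Cmult, RtoC, Re, Im; simpl; ring.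
    + intros t _. unfold clin. apply C_eq; unfold Cplus, Cmult, RtoC, Re, Im; simpl; ring.
  -
    intros phi psi Hphi Hpsi Heq x0 y0 Hxy.
    destruct (common a b d E (phi :: psi :: nil) hab HdD HED ltac:(repeat constructor; auto)) as [r [Hr [Gd [GE Gl]]]].
    pose proof (List.Forall_inv Gl) as Gphi. pose proof (List.Forall_inv (List.Forall_inv_tail Gl)) as Gpsi.
    destruct Hxy as [Hx0 Hy0]. assert (Jy : J a b r y0) by (apply inI_J; auto).
    set (chi := clin (RtoC 1) (RtoC (-1)) (fun t => phi t y0) (fun t => psi t y0)).
    assert (Gchi : good1 a b r chi) by (apply good1_clin; auto).
    set (G := fun t => act a d chi t).
    assert (GG : good1 a b r G).
    { apply (good1_ext a b r (clin (RtoC 1) (RtoC (-1)) (fun t => star_fun a d phi t y0) (fun t => star_fun a d psi t y0)));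
        [|apply good1_clin; auto; apply star_good; auto].
      intros t Jt. unfold G, chi. rewrite (act_lin a b r d t); auto; apply good1_col; auto. }
    assert (G0 : forall t, a <= t <= b -> G t = RtoC 0).
    { intros t Ht. unfold G, chi. rewrite (act_lin a b r d t); auto; try (apply good1_col; auto).
      apply clin_zero_pt. apply Heq. split; auto. unfold J; lra. }
    set (Phi := fun x y => Cmult (Cconj (chi x)) (chi y)).
    assert (SPhi : smooth_nbhd a b Phi).
    { apply (smooth_of_good a b r); auto. apply good_of_good1; auto. apply good1_conj; auto. }
    pose proof (Hed Phi SPhi) as HI.
    apply (f_equal Re) in HI. rewrite !cRInt_Re in HI.
    rewrite (RInt_ext (fun x => Re (act a E (fun t => act a d (fun y => Phi x y) t) x)) (fun _ => 0)) in HI.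
    2:{ intros x Hx. rewrite Rmin_left, Rmax_right in Hx by lra.
        assert (Jx : J a b r x) by (unfold J; lra).
        assert (Gg : good1 a b r (fun t => act a d (fun y => Phi x y) t)).
        { apply (good1_ext a b r (clin (Cconj (chi x)) (RtoC 0) G G)); [|apply good1_lin; auto].
          intros t Jt. rewrite (act_loc a b r d t _ (clin (Cconj (chi x)) (RtoC 0) chi chi)); auto.
          - rewrite (act_lin a b r d t); auto.
          - intros s _. unfold clin, Phi. apply C_eq; unfold Cplus, Cmult, RtoC, Re, Im; simpl; ring. }
        assert (Zg : forall t, a <= t <= b -> act a d (fun y => Phi x y) t = RtoC 0).
        { intros t Ht. assert (Jt : J a b r t) by (unfold J; lra).
          rewrite (act_loc a b r d t _ (clin (Cconj (chi x)) (RtoC 0) chi chi)); auto.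
          - rewrite (act_lin a b r d t); auto. fold (G t). rewrite G0; auto.
            apply C_eq; unfold Cplus, Cmult, RtoC, Re, Im; simpl; ring.
          - intros s _. unfold clin, Phi. apply C_eq; unfold Cplus, Cmult, RtoC, Re, Im; simpl; ring. }
        rewrite (act_zero a b r E (fun t => act a d (fun y => Phi x y) t) x hab Hr GE Gg Zg ltac:(lra)).
        reflexivity. }
    rewrite RInt_const in HI.
    rewrite (RInt_ext (fun x => Re (Phi x x)) (fun x => Re (chi x) * Re (chi x) + Im (chi x) * Im (chi x))) in HI.
    2:{ intros x _. unfold Phi, Cmult, Cconj, Re, Im; simpl; ring. }
    assert (Z := normsq_zero a b r chi hab Hr Gchi).
    apply lin_zero. apply Z; auto.
    rewrite <- HI. unfold scal; simpl; unfold mult; simpl; ring.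
  -
    intros psi Hpsi.
    destruct (common a b d E (psi :: nil) hab HdD HED ltac:(repeat constructor; auto)) as [r [Hr [Gd [GE Gl]]]].
    pose proof (List.Forall_inv Gl) as Gpsi.
    set (phi := star_fun a E psi).
    assert (Gphi : good a b r phi) by (apply star_good; auto).
    exists phi. split. apply (smooth_of_good a b r); auto.
    intros x0 y0 Hxy. destruct Hxy as [Hx0 Hy0]. assert (Jy : J a b r y0) by (apply inI_J; auto).
    assert (GF : good a b r (star_fun a d phi)) by (apply star_good; auto).
    set (chi := clin (RtoC 1) (RtoC (-1)) (fun t => star_fun a d phi t y0) (fun t => psi t y0)).
    assert (Gchi : good1 a b r chi) by (apply good1_clin; auto).
    set (Phi := fun x y => Cmult (Cconj (chi x)) (psi y y0)).
    assert (SPhi : smooth_nbhd a b Phi).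
    { apply (smooth_of_good a b r); auto. apply good_of_good1; auto. apply good1_conj; auto.
      apply good1_col; auto. }
    pose proof (Hde Phi SPhi) as HI.
    apply (f_equal Re) in HI. rewrite !cRInt_Re in HI.
    rewrite (RInt_ext (fun x => Re (act a d (fun t => act a E (fun y => Phi x y) t) x))
                      (fun x => Re (Cmult (Cconj (chi x)) (star_fun a d phi x y0)))) in HI.
    2:{ intros x Hx. rewrite Rmin_left, Rmax_right in Hx by lra.
        assert (Jx : J a b r x) by (unfold J; lra).
        rewrite (act_loc a b r d x _ (clin (Cconj (chi x)) (RtoC 0) (fun t => phi t y0) (fun t => phi t y0))); auto.
        - rewrite (act_lin a b r d x); auto; try (apply good1_col; auto).
          unfold star_fun. unfold Cplus, Cmult, RtoC, Re, Im; simpl; ring.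
        - intros t Jt. rewrite (act_loc a b r E t _ (clin (Cconj (chi x)) (RtoC 0) (fun y => psi y y0) (fun y => psi y y0))); auto.
          + rewrite (act_lin a b r E t); auto; try (apply good1_col; auto).
          + intros s _. unfold clin, Phi. apply C_eq; unfold Cplus, Cmult, RtoC, Re, Im; simpl; ring. }
    assert (Ja : J a b r a) by (unfold J; lra). assert (Jb' : J a b r b) by (unfold J; lra).
    assert (CI : forall g h, good1 a b r g -> good1 a b r h -> ex_RInt (fun x => Re (Cmult (g x) (h x))) a b).
    { intros g h Hg Hh. apply (ex_RInt_J a b r); auto. intros t Jt.
      destruct (good1_mul a b r g h Hg Hh) as [M1 M2]. apply (Sm1_cont a b r); auto. }
    assert (I1 := CI _ _ (good1_conj a b r chi Gchi) (good1_col a b r _ y0 Jy GF)).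
    assert (I2 := CI _ _ (good1_conj a b r chi Gchi) (good1_col a b r _ y0 Jy Gpsi)).
    assert (HZ : RInt (fun x => Re (chi x) * Re (chi x) + Im (chi x) * Im (chi x)) a b = 0).
    { rewrite (RInt_ext _ (fun x => Re (Cmult (Cconj (chi x)) (star_fun a d phi x y0)) - Re (Cmult (Cconj (chi x)) (psi x y0)))).
      - replace (RInt (fun x => Re (Cmult (Cconj (chi x)) (star_fun a d phi x y0)) - Re (Cmult (Cconj (chi x)) (psi x y0))) a b)
          with (RInt (fun x => Re (Cmult (Cconj (chi x)) (star_fun a d phi x y0))) a b - RInt (fun x => Re (Cmult (Cconj (chi x)) (psi x y0))) a b)
          by (symmetry; exact (RInt_minus (V := R_CompleteNormedModule) _ _ a b I1 I2)).
        change (RInt (fun x => Re (Cmult (Cconj (chi x)) (star_fun a d phi x y0))) a b - RInt (fun x => Re (Phi x x)) a b = 0).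
        rewrite HI. ring.
      - intros x _. unfold chi, clin, Cplus, Cmult, Cconj, RtoC, Re, Im; simpl; ring. }
    apply lin_zero. apply (normsq_zero a b r chi hab Hr Gchi HZ). exact Hx0.
Qed.
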